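(* Let $\hat K$ be the reference triangle with vertices $(0,0),(1,0),(0,1)$ and let $k\ge 0$. For each edge $f$ of $\hat K$ and each $0\le i\le k$, let $\mathscr{L}^{f,i}$ be the function on $\partial\hat K$ which vanishes off $f$ and equals on $f$ the Legendre polynomial of degree $i$ (in the arclength variable of $f$), normalised so that $\int_{\partial\hat K}(\mathscr{L}^{f,i})^2=1$. Let $$\Phi_k=\{\mathbf{u}\in \mathbb{P}_k(\hat K)^2:\ \nabla\cdot\mathbf{u}=0,\ \mathbf{u}\cdot\mathbf{n}_{out}=0 \text{ on }\partial\hat K\}.$$ Then every $\mathbf{u}\in\mathbb{P}_k(\hat K)^2$ with $\nabla\cdot\mathbf{u}=0$ can be uniquely decomposed as $$\mathbf{u}=\bar{\mathbf{v}}^0_{\mathbf{u}}+\bar{\mathbf{v}}^1_{\mathbf{u}}+\sum_{f}\sum_{i=1}^{k}\bar{\mathbf{v}}^{f,i}_{\mathbf{u}},$$ where the sum over $f$ runs over the three edges of $\hat K$, and (i) $\bar{\mathbf{v}}^0_{\mathbf{u}}\in\Phi_k$; (ii) $\bar{\mathbf{v}}^1_{\mathbf{u}}$ is a constant vector; (iii) each $\bar{\mathbf{v}}^{f,i}_{\mathbf{u}}\in\mathbb{P}_k(\hat K)^2$ is $L^2(\hat K)^2$-orthogonal to $\Phi_k$, satisfies $\nabla\cdot\bar{\mathbf{v}}^{f,i}_{\mathbf{u}}=0$, and its normal trace $\bar{\mathbf{v}}^{f,i}_{\mathbf{u}}\cdot\mathbf{n}_{out}|_{\partial\hat K}$ is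 $L^2(\partial\hat K)$-orthogonal to every $\mathscr{L}^{g,j}$ with $g$ an edge, $0\le j\le k$, and $(g,j)\neq(f,i)$.
   Context: $\mathbb{P}_k(\hat K)^2$ denotes vector fields on $\hat K$ whose two components are polynomials of total degree at most $k$; $\mathbf{n}_{out}$ is the outward unit normal on $\partial\hat K$. *)

(* Defs.v *)
From Stdlib Require Import Reals Lra List.
From Coquelicot Require Import Coquelicot.
Open Scope R_scope.

Fixpoint sumR (g : nat -> R) (n : nat) : R :=
  match n with O => 0 | S m => sumR g m + g m end.

Definition is_Pk (k : nat) (p : R -> R -> R) : Prop :=
  exists c : nat -> nat -> R, forall x y : R,
    p x y = sumR (fun i => sumR (fun j => c i j * x ^ i * y ^ j) (S k - i)) (S k).

Record VF := mkVF { c1 : R -> R -> R ; c2 : R -> R -> R }.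

Definition is_Pk2 (k : nat) (u : VF) : Prop := is_Pk k (c1 u) /\ is_Pk k (c2 u).

Definition vadd (u v : VF) : VF :=
  mkVF (fun x y => c1 u x y + c1 v x y) (fun x y => c2 u x y + c2 v x y).
Definition vzero : VF := mkVF (fun _ _ => 0) (fun _ _ => 0).
Fixpoint vsum (g : nat -> VF) (n : nat) : VF :=
  match n with O => vzero | S m => vadd (vsum g m) (g m) end.

Definition veq (u v : VF) : Prop :=
  forall x y : R, c1 u x y = c1 v x y /\ c2 u x y = c2 v x y.

Definition is_const (v : VF) : Prop :=
  exists a b : R, forall x y : R, c1 v x y = a /\ c2 v x y = b.

Definition divg (u : VF) (x y : R) : R :=
  Derive (fun t => c1 u t y) x + Derive (fun t => c2 u x t) y.
Definition div_free (u : VF) : Prop := forall x y : R, divg u x y = 0.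

Definition L2K (u v : VF) : R :=
  RInt (fun x => RInt (fun y => c1 u x y * c1 v x y + c2 u x y * c2 v x y) 0 (1 - x)) 0 1.

Inductive edge := Ebot | Ehyp | Eleft.
Definition edges : list edge := Ebot :: Ehyp :: Eleft :: nil.

Definition elen (f : edge) : R :=
  match f with Ebot => 1 | Ehyp => sqrt 2 | Eleft => 1 end.

(* arclength parametrisation s in [0, elen f] of each edge *)
Definition epx (f : edge) (s : R) : R :=
  match f with Ebot => s | Ehyp => 1 - s / sqrt 2 | Eleft => 0 end.
Definition epy (f : edge) (s : R) : R :=
  match f with Ebot => 0 | Ehyp => s / sqrt 2 | Eleft => 1 - s end.

Definition enx (f : edge) : R :=
  match f with Ebot => 0 | Ehyp => / sqrt 2 | Eleft => -1 end.
Definition eny (f : edge) : R :=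
  match f with Ebot => -1 | Ehyp => / sqrt 2 | Eleft => 0 end.

(* a function on the boundary, given edgewise in the arclength variable *)
Definition bfun := edge -> R -> R.

Definition ntrace (u : VF) : bfun :=
  fun f s => c1 u (epx f s) (epy f s) * enx f + c2 u (epx f s) (epy f s) * eny f.

Definition L2B (p q : bfun) : R :=
  fold_right Rplus 0 (map (fun f => RInt (fun s => p f s * q f s) 0 (elen f)) edges).

(* Legendre polynomials on [-1,1]: legpair n x = (P_n x, P_(n+1) x),
   (n+2) P_(n+2) = (2n+3) x P_(n+1) - (n+1) P_n *)
Fixpoint legpair (n : nat) (x : R) : R * R :=
  match n with
  | O => (1, x)
  | S m => let (a, b) := legpair m x in
           (b, ((2 * INR m + 3) * x * b - (INR m + 1) * a) / (INR m + 2))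
  end.
Definition legendre (n : nat) (x : R) : R := fst (legpair n x).

Definition leg_edge (f : edge) (i : nat) (s : R) : R :=
  legendre i (2 * s / elen f - 1).

Definition edge_eqb (f g : edge) : bool :=
  match f, g with
  | Ebot, Ebot | Ehyp, Ehyp | Eleft, Eleft => true
  | _, _ => false
  end.

Definition scrL (f : edge) (i : nat) : bfun :=
  fun g s =>
    if edge_eqb g f then
      leg_edge f i s / sqrt (RInt (fun t => (leg_edge f i t) ^ 2) 0 (elen f))
    else 0.

Definition in_Phi (k : nat) (u : VF) : Prop :=
  is_Pk2 k u /\ div_free u /\
  (forall f s, 0 <= s <= elen f -> ntrace u f s = 0).

(* the decomposition u = v0 + v1 + sum_f sum_{i=1}^k V f i *)
Definition decomp_sum (k : nat) (v0 v1 : VF) (V : edge -> nat -> VF) : VF :=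
  vadd (vadd v0 v1)
       (vsum (fun i => vadd (vadd (V Ebot (S i)) (V Ehyp (S i))) (V Eleft (S i))) k).

Definition is_decomp (k : nat) (u v0 v1 : VF) (V : edge -> nat -> VF) : Prop :=
  veq u (decomp_sum k v0 v1 V) /\
  in_Phi k v0 /\
  is_const v1 /\
  (forall f i, (1 <= i <= k)%nat ->
     is_Pk2 k (V f i) /\
     (forall w, in_Phi k w -> L2K (V f i) w = 0) /\
     div_free (V f i) /\
     (forall g j, (j <= k)%nat -> (g <> f \/ j <> i) ->
        L2B (ntrace (V f i)) (scrL g j) = 0)).

(* Main.v *)
Require Import Defs.
From Stdlib Require Import Reals.
From Coquelicot Require Import Coquelicot.
Open Scope R_scope.
From Stdlib Require Import Lra Lia List FunctionalExtensionality Classical IndefiniteDescription.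
Require Import Defs.

Ltac fext := let x := fresh "x" in let y := fresh "y" in
  apply functional_extensionality; intro x; try (apply functional_extensionality; intro y).
Ltac req := match goal with |- ?a = ?b => change (@eq R a b) end.

Lemma d_plus (f g : R -> R) x df dg : is_derive f x df -> is_derive g x dg ->
  is_derive (fun t => f t + g t) x (df + dg).
Proof. intros; apply (is_derive_plus f g); auto. Qed.
Lemma d_minus (f g : R -> R) x df dg : is_derive f x df -> is_derive g x dg ->
  is_derive (fun t => f t - g t) x (df - dg).
Proof. intros; apply (is_derive_minus f g); auto. Qed.
Lemma d_mult (f g : R -> R) x df dg : is_derive f x df -> is_derive g x dg ->
  is_derive (fun t => f t * g t) x (df * g x + f x * dg).
Proof. intros; apply (is_derive_mult f g); auto. intros; apply Rmult_comm. Qed.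
Lemma d_const (c x : R) : is_derive (fun _ => c) x 0.
Proof. apply (is_derive_const c x). Qed.
Lemma d_id (x : R) : is_derive (fun t => t) x 1.
Proof. apply (is_derive_id x). Qed.
Lemma d_comp (f g : R -> R) x df dg : is_derive f (g x) df -> is_derive g x dg ->
  is_derive (fun t => f (g t)) x (dg * df).
Proof. intros; apply (is_derive_comp f g); auto. Qed.
Lemma d_ext (f g : R -> R) (x l l' : R) : (forall t, f t = g t) -> l = l' -> is_derive f x l -> is_derive g x l'.
Proof. intros H -> ; apply is_derive_ext; auto. Qed.
Lemma d_aff (a b x : R) : is_derive (fun t => b + a * t) x a.
Proof. pose proof (d_plus _ _ x _ _ (d_mult (fun _ => a) (fun t => t) x _ _ (d_const a x) (d_id x)) (d_const b x)) as H.
 eapply d_ext; [| |exact H]; intros; simpl; ring. Qed.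

Lemma sumR_ext g h n : (forall i, (i < n)%nat -> g i = h i) -> sumR g n = sumR h n.
Proof. induction n; simpl; intros; auto. rewrite IHn, H; auto. Qed.
Lemma sumR_plus g h n : sumR (fun i => g i + h i) n = sumR g n + sumR h n.
Proof. induction n; simpl; [ring| rewrite IHn; ring]. Qed.
Lemma sumR_scal c g n : sumR (fun i => c * g i) n = c * sumR g n.
Proof. induction n; simpl; [ring| rewrite IHn; ring]. Qed.
Lemma sumR_zero n : sumR (fun _ => 0) n = 0.
Proof. induction n; simpl; [ring| rewrite IHn; ring]. Qed.
Lemma sumR_shift g n : sumR g (S n) = g O + sumR (fun i => g (S i)) n.
Proof. induction n; simpl in *; [ring| rewrite IHn; ring]. Qed.
Lemma sumR_ind (P : R -> Prop) g n : P 0 -> (forall a b, P a -> P b -> P (a + b)) ->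
  (forall i, (i < n)%nat -> P (g i)) -> P (sumR g n).
Proof. induction n; simpl; intros; auto. apply H0; auto. Qed.

Fixpoint U (n : nat) (p : R -> R) : Prop :=
  match n with
  | O => exists c, p = fun _ => c
  | S m => exists c p1, U m p1 /\ p = fun s => c + s * p1 s
  end.
Fixpoint LU (n : nat) (p : R -> R) (a : R) : Prop :=
  match n with
  | O => p = fun _ => a
  | S m => exists c p1, LU m p1 a /\ p = fun s => c + s * p1 s
  end.

Lemma LU_U n p a : LU n p a -> U n p.
Proof. revert p; induction n; simpl; intros p H. exists a; auto.
 destruct H as (c & p1 & H1 & ->). exists c, p1; auto. Qed.
Lemma U_LU n p : U n p -> exists a, LU n p a.
Proof. revert p; induction n; simpl; intros p H. destruct H as [c ->]; exists c; auto.
 destruct H as (c & p1 & H1 & ->). destruct (IHn _ H1) as [a Ha]. exists a, c, p1; auto. Qed.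
Lemma LU_lin n p q a b l m : LU n p a -> LU n q b ->
  LU n (fun s => l * p s + m * q s) (l * a + m * b).
Proof. revert p q; induction n; simpl; intros p q Hp Hq. subst; auto.
 destruct Hp as (c & p1 & H1 & ->), Hq as (d & q1 & H2 & ->).
 exists (l * c + m * d), (fun s => l * p1 s + m * q1 s). split; auto.
 apply functional_extensionality; intros; ring. Qed.
Lemma U_lin n p q l m : U n p -> U n q -> U n (fun s => l * p s + m * q s).
Proof. intros Hp Hq. destruct (U_LU _ _ Hp) as [a Ha], (U_LU _ _ Hq) as [b Hb].
 eapply LU_U, LU_lin; eauto. Qed.
Lemma LU_mono0 n p : U n p -> LU (S n) p 0.
Proof. revert p; induction n; intros p H.
 - destruct H as [c ->]. exists c, (fun _ => 0). split. reflexivity.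
   apply functional_extensionality; intros; simpl; ring.
 - destruct H as (c & p1 & H1 & ->). exists c, p1; split; auto. Qed.
Lemma U_mono n p : U n p -> U (S n) p.
Proof. intros; eapply LU_U, LU_mono0; eauto. Qed.
Lemma U_mono_le n m p : (n <= m)%nat -> U n p -> U m p.
Proof. induction 1; auto. intros; apply U_mono; auto. Qed.
Lemma LU_mulx n p a : LU n p a -> LU (S n) (fun s => s * p s) a.
Proof. intros; exists 0, p; split; auto. apply functional_extensionality; intros; ring. Qed.
Lemma U_mulx n p : U n p -> U (S n) (fun s => s * p s).
Proof. intros H; destruct (U_LU _ _ H) as [a Ha]; eapply LU_U, LU_mulx; eauto. Qed.
Lemma U_const n c : U n (fun _ => c).
Proof. apply U_mono_le with O; [lia| exists c; auto]. Qed.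
Lemma U_plus n p q : U n p -> U n q -> U n (fun s => p s + q s).
Proof. intros; replace (fun s => p s + q s) with (fun s => 1 * p s + 1 * q s).
 apply U_lin; auto. apply functional_extensionality; intros; ring. Qed.
Lemma U_scal n p l : U n p -> U n (fun s => l * p s).
Proof. intros; replace (fun s => l * p s) with (fun s => l * p s + 0 * p s).
 apply U_lin; auto. apply functional_extensionality; intros; ring. Qed.
Lemma LU_zero_U m r : LU (S m) r 0 -> U m r.
Proof. revert r; induction m; intros r (c & r1 & H1 & ->).
 - simpl in H1; subst. exists c. apply functional_extensionality; intros; ring.
 - exists c, r1; split; auto. Qed.

Lemma LU_aff n p a al be : LU n p a -> LU n (fun s => p (al * s + be)) (a * al ^ n).
Proof. revert p a; induction n; intros p a H.
 - simpl in *; subst. apply functional_extensionality; intros; ring.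
 - destruct H as (c & p1 & H1 & ->).
   specialize (IHn _ _ H1).
   assert (Hq : U n (fun s => c + be * p1 (al * s + be))).
   { replace (fun s => c + be * p1 (al * s + be)) with (fun s => 1 * (fun _ => c) s + be * (fun s => p1 (al * s + be)) s).
     apply U_lin. apply U_const. eapply LU_U; eauto. apply functional_extensionality; intros; ring. }
   pose proof (LU_mono0 _ _ Hq) as H2.
   pose proof (LU_mulx _ _ _ IHn) as H3.
   pose proof (LU_lin _ _ _ _ _ 1 al H2 H3) as H4.
   replace (a * al ^ S n) with (1 * 0 + al * (a * al ^ n)) by (simpl; ring).
   replace (fun s => c + (al * s + be) * p1 (al * s + be)) with
     (fun s => 1 * (c + be * p1 (al * s + be)) + al * (s * p1 (al * s + be))); auto.
   apply functional_extensionality; intros; ring. Qed.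
Lemma U_aff n p al be : U n p -> U n (fun s => p (al * s + be)).
Proof. intros H; destruct (U_LU _ _ H) as [a Ha]; eapply LU_U, LU_aff; eauto. Qed.

Lemma U_deriv0 p : U 0 p -> forall s, is_derive p s 0.
Proof. intros [c ->] s; apply d_const. Qed.
Lemma U_deriv n p : U (S n) p -> exists p', U n p' /\ forall s, is_derive p s (p' s).
Proof. revert p; induction n; intros p (c & p1 & H1 & ->).
 - destruct H1 as [c1 ->]. exists (fun _ => c1); split. exists c1; auto.
   intros s. pose proof (d_plus _ _ s _ _ (d_const c s) (d_mult (fun t => t) (fun _ => c1) s _ _ (d_id s) (d_const c1 s))) as H.
   eapply d_ext; [| |exact H]; intros; cbv beta; ring.
 - destruct (IHn _ H1) as (p1' & H2 & H3).
   exists (fun s => p1 s + s * p1' s); split.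
   apply U_plus; auto. apply U_mulx; auto.
   intros s. pose proof (d_plus _ _ s _ _ (d_const c s) (d_mult (fun t => t) p1 s _ _ (d_id s) (H3 s))) as H.
   eapply d_ext; [| |exact H]; intros; cbv beta; ring. Qed.
Lemma U_derive n p : U n p -> forall s, ex_derive p s.
Proof. destruct n; intros H s. exists 0; apply U_deriv0; auto.
 destruct (U_deriv _ _ H) as (p' & _ & H'). exists (p' s); auto. Qed.
Lemma U_cont n p : U n p -> forall s, continuous p s.
Proof. intros H s; apply (ex_derive_continuous p s); eapply U_derive; eauto. Qed.

Lemma cont_eps (f : R -> R) x0 : continuous f x0 -> forall e, e > 0 ->
  exists d, d > 0 /\ forall x, Rabs (x - x0) < d -> Rabs (f x - f x0) < e.
Proof. intros Hc e He. apply continuity_pt_filterlim in Hc.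
 destruct (Hc e He) as [d [Hd H]]. exists d; split; auto.
 intros x Hx. destruct (Req_dec x x0). subst; rewrite Rminus_diag, Rabs_R0; auto.
 apply H. split. split. exact I. auto. apply Hx. Qed.

Lemma cont_zero_right (f : R -> R) a eps : continuous f a -> eps > 0 ->
  (forall s, a < s <= a + eps -> f s = 0) -> f a = 0.
Proof. intros Hc He H. destruct (Req_dec (f a) 0); auto.
 destruct (cont_eps f a Hc (Rabs (f a))) as [d [Hd Hd']]. apply Rabs_pos_lt; auto.
 set (s := a + Rmin (d/2) eps).
 assert (0 < Rmin (d/2) eps) by (apply Rmin_pos; lra).
 assert (Rmin (d/2) eps <= d/2) by apply Rmin_l.
 assert (Rmin (d/2) eps <= eps) by apply Rmin_r.
 specialize (Hd' s). rewrite (H s) in Hd' by (unfold s; lra).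
 exfalso. rewrite Rminus_0_l, Rabs_Ropp in Hd'. unfold s in Hd'.
 replace (a + Rmin (d / 2) eps - a) with (Rmin (d/2) eps) in Hd' by ring.
 rewrite Rabs_pos_eq in Hd' by lra. specialize (Hd' ltac:(lra)). lra. Qed.

Lemma U_zero0 n p eps : eps > 0 -> U n p -> (forall s, 0 <= s <= eps -> p s = 0) -> forall s, p s = 0.
Proof. revert p; induction n; intros p He Hp H.
 - destruct Hp as [c ->]. intros; apply (H 0); lra.
 - destruct Hp as (c & p1 & H1 & ->).
   assert (Hc : c = 0). { specialize (H 0 ltac:(lra)); simpl in H; lra. }
   subst c.
   assert (H2 : forall s, 0 < s <= eps -> p1 s = 0).
   { intros s Hs. specialize (H s ltac:(lra)). simpl in H.
     rewrite Rplus_0_l in H. apply Rmult_integral in H; destruct H; [lra|auto]. }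
   assert (H3 : p1 0 = 0).
   { apply (cont_zero_right p1 0 eps); auto. eapply U_cont; eauto.
     intros; apply H2; lra. }
   assert (H4 : forall s, p1 s = 0).
   { apply (IHn p1 He H1). intros s Hs. destruct (Req_dec s 0). subst; auto. apply H2; lra. }
   intros s; rewrite H4; ring. Qed.

Lemma U_zero n p a b : a < b -> U n p -> (forall s, a <= s <= b -> p s = 0) -> forall s, p s = 0.
Proof. intros Hab Hp H s.
 pose proof (U_aff n p 1 a Hp) as Hq.
 assert (forall t, p (1 * t + a) = 0).
 { apply (U_zero0 n (fun t => p (1 * t + a)) (b - a)); auto. lra. intros t Ht; apply H; lra. }
 specialize (H0 (s - a)). replace (1 * (s - a) + a) with s in H0 by ring. auto. Qed.

Lemma U_span n p (q : nat -> R -> R) (l : nat -> R) :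
  (forall j, (j <= n)%nat -> LU j (q j) (l j) /\ l j <> 0) -> U n p ->
  exists a : nat -> R, forall s, p s = sumR (fun j => a j * q j s) (S n).
Proof. revert p; induction n; intros p Hq Hp.
 - destruct (Hq O ltac:(lia)) as [H0 Hl]. simpl in H0. destruct Hp as [c ->].
   exists (fun _ => c / l O). intros s; simpl. rewrite H0. field; auto.
 - destruct (U_LU _ _ Hp) as [ap Hap].
   destruct (Hq (S n) ltac:(lia)) as [HqS HlS].
   set (r := fun s => 1 * p s + (- (ap / l (S n))) * q (S n) s).
   assert (Hr : LU (S n) r 0).
   { replace 0 with (1 * ap + (- (ap / l (S n))) * l (S n)) by (field; auto).
     apply LU_lin; auto. }
   apply LU_zero_U in Hr.
   destruct (IHn r (fun j Hj => Hq j ltac:(lia)) Hr) as [a Ha].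
   exists (fun j => if Nat.eqb j (S n) then ap / l (S n) else a j).
   intros s. change (sumR ?g (S (S n))) with (sumR g (S n) + g (S n)).
   cbv beta. rewrite Nat.eqb_refl.
   rewrite (sumR_ext _ (fun j => a j * q j s)).
   rewrite <- Ha. unfold r. ring.
   intros i Hi. destruct (Nat.eqb_spec i (S n)); [lia|auto]. Qed.

Fixpoint Q (n : nat) (f : R -> R -> R) : Prop :=
  match n with
  | O => exists c, f = fun _ _ => c
  | S m => exists c g h, Q m g /\ Q m h /\ f = fun x y => c + x * g x y + y * h x y
  end.

Lemma Q_const n c : Q n (fun _ _ => c).
Proof. induction n. exists c; auto. exists c, (fun _ _ => 0), (fun _ _ => 0).
 assert (Q n (fun _ _ => 0)).
 { clear IHn; induction n. exists 0; auto. exists 0, (fun _ _ => 0), (fun _ _ => 0); repeat split; auto.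
   apply functional_extensionality; intros; apply functional_extensionality; intros; ring. }
 repeat split; auto. apply functional_extensionality; intros; apply functional_extensionality; intros; ring. Qed.

Lemma Q_mono n f : Q n f -> Q (S n) f.
Proof. revert f; induction n; intros f H.
 - destruct H as [c ->]. apply Q_const.
 - destruct H as (c & g & h & H1 & H2 & ->). exists c, g, h; auto. Qed.
Lemma Q_mono_le n m f : (n <= m)%nat -> Q n f -> Q m f.
Proof. induction 1; auto. intros; apply Q_mono; auto. Qed.


Lemma Q_lin n f g l m : Q n f -> Q n g -> Q n (fun x y => l * f x y + m * g x y).
Proof. revert f g; induction n; intros f g Hf Hg.
 - destruct Hf as [c ->], Hg as [d ->]. exists (l * c + m * d); auto.
 - destruct Hf as (c & f1 & f2 & H1 & H2 & ->), Hg as (d & g1 & g2 & H3 & H4 & ->).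
   exists (l * c + m * d), (fun x y => l * f1 x y + m * g1 x y), (fun x y => l * f2 x y + m * g2 x y).
   repeat split; auto. fext; ring. Qed.
Lemma Q_plus n f g : Q n f -> Q n g -> Q n (fun x y => f x y + g x y).
Proof. intros; replace (fun x y => f x y + g x y) with (fun x y => 1 * f x y + 1 * g x y).
 apply Q_lin; auto. fext; ring. Qed.
Lemma Q_scal n f l : Q n f -> Q n (fun x y => l * f x y).
Proof. intros; replace (fun x y => l * f x y) with (fun x y => l * f x y + 0 * f x y).
 apply Q_lin; auto. fext; ring. Qed.
Lemma Q_mulx n f : Q n f -> Q (S n) (fun x y => x * f x y).
Proof. intros; exists 0, f, (fun _ _ => 0); repeat split; auto. apply Q_const. fext; ring. Qed.
Lemma Q_muly n f : Q n f -> Q (S n) (fun x y => y * f x y).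
Proof. intros; exists 0, (fun _ _ => 0), f; repeat split; auto. apply Q_const. fext; ring. Qed.
Lemma Q_mul m n f g : Q m f -> Q n g -> Q (m + n) (fun x y => f x y * g x y).
Proof. revert f; induction m; intros f Hf Hg.
 - destruct Hf as [c ->]. simpl. apply Q_scal; auto.
 - destruct Hf as (c & f1 & f2 & H1 & H2 & ->). rewrite Nat.add_succ_l.
   replace (fun x y => (c + x * f1 x y + y * f2 x y) * g x y) with
     (fun x y => (fun x y => c * g x y + x * (f1 x y * g x y)) x y + y * (f2 x y * g x y)).
   apply Q_plus. apply Q_plus. apply Q_mono. apply Q_mono_le with n. lia. apply Q_scal; auto.
   apply Q_mulx; auto. apply Q_muly; auto. fext; ring. Qed.
Lemma Q_x : Q 1 (fun x y => x).
Proof. replace (fun x y : R => x) with (fun x y : R => x * 1). apply Q_mulx, Q_const. fext; ring. Qed.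
Lemma Q_y : Q 1 (fun x y => y).
Proof. replace (fun x y : R => y) with (fun x y : R => y * 1). apply Q_muly, Q_const. fext; ring. Qed.

Lemma Q_line n f x0 y0 a b : Q n f -> U n (fun s => f (x0 + a * s) (y0 + b * s)).
Proof. revert f; induction n; intros f Hf.
 - destruct Hf as [c ->]. exists c; auto.
 - destruct Hf as (c & g & h & H1 & H2 & ->).
   specialize (IHn g H1) as Hg. specialize (IHn h H2) as Hh.
   replace (fun s => c + (x0 + a * s) * g (x0 + a * s) (y0 + b * s) + (y0 + b * s) * h (x0 + a * s) (y0 + b * s))
    with (fun s => (fun s => c + x0 * g (x0 + a * s) (y0 + b * s) + y0 * h (x0 + a * s) (y0 + b * s)) s
                   + s * (fun s => a * g (x0 + a * s) (y0 + b * s) + b * h (x0 + a * s) (y0 + b * s)) s).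
   apply U_plus. apply U_mono. apply U_plus. apply U_plus. apply U_const. apply U_scal; auto. apply U_scal; auto.
   apply U_mulx. apply U_lin; auto.
   apply functional_extensionality; intros; ring. Qed.

Lemma Q_univ n p al be ga : U n p -> Q n (fun x y => p (al * x + be * y + ga)).
Proof. revert p; induction n; intros p Hp.
 - destruct Hp as [c ->]. exists c; auto.
 - destruct Hp as (c & p1 & H1 & ->). specialize (IHn _ H1).
   replace (fun x y => c + (al * x + be * y + ga) * p1 (al * x + be * y + ga)) with
     (fun x y => (fun x y => c + ga * p1 (al * x + be * y + ga)) x y + x * (al * p1 (al * x + be * y + ga))
        + y * (be * p1 (al * x + be * y + ga))).
   apply Q_plus. apply Q_plus. apply Q_mono. apply Q_plus. apply Q_const. apply Q_scal; auto.
   apply Q_mulx. apply Q_scal; auto. apply Q_muly. apply Q_scal; auto.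
   fext; ring. Qed.

Definition px (f : R -> R -> R) : R -> R -> R := fun x y => Derive (fun t => f t y) x.
Definition py (f : R -> R -> R) : R -> R -> R := fun x y => Derive (fun t => f x t) y.
Definition CR (f : R -> R -> R) : Prop := forall x0 y0 a b s : R,
  is_derive (fun s : R => f (x0 + a * s) (y0 + b * s)) s
    (a * px f (x0 + a * s) (y0 + b * s) + b * py f (x0 + a * s) (y0 + b * s)).

Lemma CR_px f : CR f -> forall x y : R, is_derive (fun t => f t y) x (px f x y).
Proof. intros H x y. specialize (H 0 y 1 0 x).
 eapply d_ext; [| | exact H]; intros; cbv beta. f_equal; req; ring.
 replace (0 + 1 * x) with x by ring. replace (y + 0 * x) with y by ring. ring. Qed.
Lemma CR_py f : CR f -> forall x y : R, is_derive (fun t => f x t) y (py f x y).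
Proof. intros H x y. specialize (H x 0 0 1 y).
 eapply d_ext; [| | exact H]; intros; cbv beta. f_equal; req; ring.
 replace (0 + 1 * y) with y by ring. replace (x + 0 * y) with x by ring. ring. Qed.
Lemma is_px f F : (forall x y : R, is_derive (fun t => f t y) x (F x y)) -> px f = F.
Proof. intros H; fext. unfold px. apply is_derive_unique; auto. Qed.
Lemma is_py f F : (forall x y : R, is_derive (fun t => f x t) y (F x y)) -> py f = F.
Proof. intros H; fext. unfold py. apply is_derive_unique; auto. Qed.

Lemma CR_const c : CR (fun _ _ => c) /\ px (fun _ _ => c) = (fun _ _ => 0) /\ py (fun _ _ => c) = (fun _ _ => 0).
Proof. assert (px (fun _ _ => c) = (fun _ _ => 0)) as Hx by (apply is_px; intros; apply d_const).
 assert (py (fun _ _ => c) = (fun _ _ => 0)) as Hy by (apply is_py; intros; apply d_const).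
 split; [|split; auto]. unfold CR; intros. rewrite Hx, Hy.
 eapply d_ext; [| | apply (d_const c)]; intros; cbv beta; req; ring. Qed.

Lemma CR_comb F G H : CR F -> CR G -> CR H ->
  let f := fun x y => F x y + x * G x y + y * H x y in
  px f = (fun x y => px F x y + (G x y + x * px G x y) + y * px H x y) /\
  py f = (fun x y => py F x y + x * py G x y + (H x y + y * py H x y)) /\ CR f.
Proof. intros HF HG HH f.
 assert (E1 : px f = (fun x y => px F x y + (G x y + x * px G x y) + y * px H x y)).
 { apply is_px; intros x y. unfold f.
   pose proof (d_plus _ _ x _ _ (d_plus _ _ x _ _ (CR_px F HF x y) (d_mult (fun t => t) (fun t => G t y) x _ _ (d_id x) (CR_px G HG x y)))
     (d_mult (fun _ => y) (fun t => H t y) x _ _ (d_const y x) (CR_px H HH x y))) as D.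
   eapply d_ext; [| | exact D]; intros; cbv beta; ring. }
 assert (E2 : py f = (fun x y => py F x y + x * py G x y + (H x y + y * py H x y))).
 { apply is_py; intros x y. unfold f.
   pose proof (d_plus _ _ y _ _ (d_plus _ _ y _ _ (CR_py F HF x y) (d_mult (fun _ => x) (fun t => G x t) y _ _ (d_const x y) (CR_py G HG x y)))
     (d_mult (fun t => t) (fun t => H x t) y _ _ (d_id y) (CR_py H HH x y))) as D.
   eapply d_ext; [| | exact D]; intros; cbv beta; ring. }
 split; auto. split; auto. intros x0 y0 a b s. rewrite E1, E2. unfold f.
 pose proof (d_plus _ _ s _ _ (d_plus _ _ s _ _ (HF x0 y0 a b s)
    (d_mult (fun s => x0 + a * s) (fun s => G (x0 + a * s) (y0 + b * s)) s _ _ (d_aff a x0 s) (HG x0 y0 a b s)))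
    (d_mult (fun s => y0 + b * s) (fun s => H (x0 + a * s) (y0 + b * s)) s _ _ (d_aff b y0 s) (HH x0 y0 a b s))) as D.
 eapply d_ext; [| | exact D]; intros; cbv beta; ring. Qed.


Lemma Q_D n f : Q n f -> CR f /\ Q (pred n) (px f) /\ Q (pred n) (py f).
Proof. revert f; induction n; intros f Hf.
 - destruct Hf as [c ->]. destruct (CR_const c) as (H1 & H2 & H3). rewrite H2, H3.
   split; [auto| split; simpl; exists 0; reflexivity].
 - destruct Hf as (c & g & h & Hg & Hh & ->).
   destruct (IHn g Hg) as (Cg & Hgx & Hgy), (IHn h Hh) as (Ch & Hhx & Hhy).
   destruct (CR_const c) as (Cc & Ecx & Ecy).
   destruct (CR_comb _ _ _ Cc Cg Ch) as (E1 & E2 & C). cbv zeta in *.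
   rewrite E1, E2, Ecx, Ecy. split; auto. simpl.
   destruct n.
   + destruct Hg as [cg ->], Hh as [ch ->].
     destruct (CR_const cg) as (_ & -> & ->), (CR_const ch) as (_ & -> & ->).
     split; [exists cg | exists ch]; fext; ring.
   + split.
     * replace (fun x y => 0 + (g x y + x * px g x y) + y * px h x y) with
         (fun x y => 1 * (fun x y => g x y + x * px g x y) x y + 1 * (fun x y => y * px h x y) x y) by (fext; ring).
       apply Q_lin. apply Q_plus; auto. apply Q_mulx; auto. apply Q_muly; auto.
     * replace (fun x y => 0 + x * py g x y + (h x y + y * py h x y)) with
         (fun x y => 1 * (fun x y => h x y + x * py g x y) x y + 1 * (fun x y => y * py h x y) x y) by (fext; ring).
       apply Q_lin. apply Q_plus; auto. apply Q_mulx; auto. apply Q_muly; auto. Qed.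

Lemma Q_CR n f : Q n f -> CR f.
Proof. intros H; apply (Q_D n f H). Qed.

Lemma Q_mixed n f : Q n f -> px (py f) = py (px f).
Proof. revert f; induction n; intros f Hf.
 - destruct Hf as [c ->]. destruct (CR_const c) as (_ & -> & ->).
   destruct (CR_const 0) as (_ & -> & ->). auto.
 - destruct Hf as (c & g & h & Hg & Hh & ->).
   destruct (Q_D _ _ Hg) as (Cg & Hgx & Hgy), (Q_D _ _ Hh) as (Ch & Hhx & Hhy).
   destruct (CR_const c) as (Cc & Ecx & Ecy).
   destruct (CR_comb _ _ _ Cc Cg Ch) as (E1 & E2 & C). cbv zeta in *.
   rewrite E1, E2, Ecx, Ecy.
   replace (fun x y => 0 + (g x y + x * px g x y) + y * px h x y) with
     (fun x y => g x y + x * px g x y + y * px h x y) by (fext; ring).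
   replace (fun x y => 0 + x * py g x y + (h x y + y * py h x y)) with
     (fun x y => h x y + x * py g x y + y * py h x y) by (fext; ring).
   destruct (CR_comb _ _ _ Cg (Q_CR _ _ Hgx) (Q_CR _ _ Hhx)) as (_ & F2 & _).
   destruct (CR_comb _ _ _ Ch (Q_CR _ _ Hgy) (Q_CR _ _ Hhy)) as (F1 & _ & _).
   cbv zeta in *. rewrite F1, F2, (IHn g Hg), (IHn h Hh). fext; ring. Qed.

Lemma CR_lin f g l m : CR f -> CR g ->
  px (fun x y => l * f x y + m * g x y) = (fun x y => l * px f x y + m * px g x y) /\
  py (fun x y => l * f x y + m * g x y) = (fun x y => l * py f x y + m * py g x y) /\
  CR (fun x y => l * f x y + m * g x y).
Proof. intros Hf Hg.
 assert (E1 : px (fun x y => l * f x y + m * g x y) = (fun x y => l * px f x y + m * px g x y)).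
 { apply is_px; intros x y.
   pose proof (d_plus _ _ x _ _ (is_derive_scal _ x l _ (CR_px f Hf x y)) (is_derive_scal _ x m _ (CR_px g Hg x y))) as D.
   eapply d_ext; [| | exact D]; intros; cbv beta; req; ring. }
 assert (E2 : py (fun x y => l * f x y + m * g x y) = (fun x y => l * py f x y + m * py g x y)).
 { apply is_py; intros x y.
   pose proof (d_plus _ _ y _ _ (is_derive_scal _ y l _ (CR_py f Hf x y)) (is_derive_scal _ y m _ (CR_py g Hg x y))) as D.
   eapply d_ext; [| | exact D]; intros; cbv beta; req; ring. }
 split; auto; split; auto. unfold CR; intros. rewrite E1, E2.
 pose proof (d_plus _ _ s _ _ (is_derive_scal _ s l _ (Hf x0 y0 a b s)) (is_derive_scal _ s m _ (Hg x0 y0 a b s))) as D.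
 eapply d_ext; [| | exact D]; intros; cbv beta; req; ring. Qed.

Lemma divg_px u x y : divg u x y = px (c1 u) x y + py (c2 u) x y.
Proof. reflexivity. Qed.


Lemma Q_sum k (G : nat -> R -> R -> R) n : (forall i, (i < n)%nat -> Q k (G i)) ->
  Q k (fun x y => sumR (fun i => G i x y) n).
Proof. induction n; intros H; simpl. apply Q_const.
 apply (Q_plus k (fun x y => sumR (fun i => G i x y) n) (G n)); auto. Qed.
Lemma Q_powx i : Q i (fun x y => x ^ i).
Proof. induction i; simpl. exists 1; auto. apply (Q_mulx i (fun x y => x ^ i)); auto. Qed.
Lemma Q_powy i : Q i (fun x y => y ^ i).
Proof. induction i; simpl. exists 1; auto. apply (Q_muly i (fun x y => y ^ i)); auto. Qed.
Lemma Q_mono_le' n m f : Q n f -> (n <= m)%nat -> Q m f.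
Proof. intros; eapply Q_mono_le; eauto. Qed.

Lemma Pk_Q k f : is_Pk k f -> Q k f.
Proof. intros [c Hc]. replace f with (fun x y => sumR (fun i => sumR (fun j => c i j * x ^ i * y ^ j) (S k - i)) (S k)).
 2: { fext; auto. }
 apply (Q_sum k (fun i x y => sumR (fun j => c i j * x ^ i * y ^ j) (S k - i))). intros i Hi.
 apply (Q_sum k (fun j x y => c i j * x ^ i * y ^ j)). intros j Hj.
 apply Q_mono_le' with (i + j)%nat; [|lia].
 replace (fun x y => c i j * x ^ i * y ^ j) with (fun x y => c i j * (x ^ i * y ^ j)) by (fext; ring).
 apply Q_scal. apply (Q_mul i j (fun x y => x ^ i) (fun x y => y ^ j)). apply Q_powx. apply Q_powy. Qed.

Lemma sumR_zero_ext g n : (forall i, (i < n)%nat -> g i = 0) -> sumR g n = 0.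
Proof. intros H; rewrite (sumR_ext g (fun _ => 0)); auto. apply sumR_zero. Qed.
Lemma Pk_const k a : is_Pk k (fun _ _ => a).
Proof. exists (fun i j => match i, j with O, O => a | _, _ => 0 end). intros x y.
 rewrite sumR_shift, Nat.sub_0_r, sumR_shift.
 rewrite (sumR_zero_ext _ k), (sumR_zero_ext _ k). simpl; ring.
 all: try (intros; simpl; ring); try (intros; apply sumR_zero_ext; intros; simpl; ring). Qed.
Lemma Pk_plus k f g : is_Pk k f -> is_Pk k g -> is_Pk k (fun x y => f x y + g x y).
Proof. intros [c Hc] [d Hd]. exists (fun i j => c i j + d i j). intros x y. rewrite Hc, Hd.
 rewrite <- sumR_plus. apply sumR_ext; intros. rewrite <- sumR_plus. apply sumR_ext; intros. ring. Qed.
Lemma Pk_mulx k f : is_Pk k f -> is_Pk (S k) (fun x y => x * f x y).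
Proof. intros [c Hc]. exists (fun i j => match i with O => 0 | S i' => c i' j end). intros x y.
 rewrite Hc. rewrite (sumR_shift _ (S k)). rewrite (sumR_zero_ext _ (S (S k) - 0)) by (intros; simpl; ring).
 rewrite Rplus_0_l. rewrite <- sumR_scal. apply sumR_ext; intros i Hi.
 simpl (S (S k) - S i)%nat. rewrite <- sumR_scal. apply sumR_ext; intros. simpl; ring. Qed.
Lemma Pk_muly k f : is_Pk k f -> is_Pk (S k) (fun x y => y * f x y).
Proof. intros [c Hc]. exists (fun i j => match j with O => 0 | S j' => c i j' end). intros x y.
 rewrite Hc. change (sumR ?g (S (S k))) with (sumR g (S k) + g (S k)). cbv beta.
 replace (S (S k) - S k)%nat with 1%nat by lia. simpl (sumR _ 1). rewrite <- sumR_scal.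
 rewrite Rplus_0_l, Rmult_0_l, Rmult_0_l, Rplus_0_r.
 apply sumR_ext; intros i Hi. replace (S (S k) - i)%nat with (S (S k - i)) by lia.
 rewrite sumR_shift. rewrite <- sumR_scal. simpl (match O with O => 0 | S j' => _ end).
 rewrite Rmult_0_l, Rmult_0_l, Rplus_0_l. apply sumR_ext; intros. simpl; ring. Qed.

Lemma Q_Pk k f : Q k f -> is_Pk k f.
Proof. revert f; induction k; intros f Hf.
 - destruct Hf as [c ->]. apply Pk_const.
 - destruct Hf as (c & g & h & Hg & Hh & ->).
   apply (Pk_plus (S k) (fun x y => c + x * g x y) (fun x y => y * h x y)).
   apply (Pk_plus (S k) (fun _ _ => c) (fun x y => x * g x y)). apply Pk_const.
   apply Pk_mulx; auto. apply Pk_muly; auto. Qed.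

Lemma d_sumR (F : nat -> R -> R) (F' : nat -> R) n (t : R) :
  (forall i, (i < n)%nat -> is_derive (F i) t (F' i)) ->
  is_derive (fun s => sumR (fun i => F i s) n) t (sumR F' n).
Proof. induction n; intros H; simpl. apply d_const.
 apply (d_plus (fun s => sumR (fun i => F i s) n) (F n)); auto. Qed.

Lemma antider_y k F : is_Pk k F -> exists G, Q (S k) G /\
  forall x y : R, is_derive (fun t => G x t) y (F x y).
Proof. intros [c Hc].
 exists (fun x y => sumR (fun i => sumR (fun j => c i j * x ^ i * (y ^ (S j) / INR (S j))) (S k - i)) (S k)).
 split.
 - apply (Q_sum (S k) (fun i x y => sumR (fun j => c i j * x ^ i * (y ^ (S j) / INR (S j))) (S k - i))). intros i Hi.
   apply (Q_sum (S k) (fun j x y => c i j * x ^ i * (y ^ (S j) / INR (S j)))). intros j Hj.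
   apply Q_mono_le' with (i + S j)%nat; [|lia].
   replace (fun x y => c i j * x ^ i * (y ^ (S j) / INR (S j))) with (fun x y => (c i j / INR (S j)) * (x ^ i * y ^ (S j))) by (fext; field; apply not_0_INR; lia).
   apply Q_scal. apply (Q_mul i (S j) (fun x y => x ^ i) (fun x y => y ^ (S j))). apply Q_powx. apply Q_powy.
 - intros x y. rewrite Hc.
   apply (d_sumR (fun i t => sumR (fun j => c i j * x ^ i * (t ^ (S j) / INR (S j))) (S k - i))). intros i Hi.
   apply (d_sumR (fun j t => c i j * x ^ i * (t ^ (S j) / INR (S j)))). intros j Hj.
   pose proof (is_derive_pow (fun t => t) (S j) y 1 (d_id y)) as D.
   pose proof (is_derive_scal _ y (c i j * x ^ i / INR (S j)) _ D) as D2.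
   eapply d_ext; [| | exact D2]; intros; cbv beta; req. field; apply not_0_INR; lia.
   simpl pred. field; apply not_0_INR; lia. Qed.


Lemma U_exRInt n p a b : U n p -> ex_RInt p a b.
Proof. intros H; apply (ex_RInt_continuous (V := R_CompleteNormedModule)); intros; eapply U_cont; eauto. Qed.
Lemma RInt_lin (f g : R -> R) a b l m : ex_RInt f a b -> ex_RInt g a b ->
  RInt (fun t => l * f t + m * g t) a b = l * RInt f a b + m * RInt g a b.
Proof. intros Hf Hg.
 rewrite (RInt_plus (fun t => l * f t) (fun t => m * g t)).
 rewrite (RInt_scal f), (RInt_scal g); auto.
 apply (ex_RInt_scal (V := R_CompleteNormedModule)); auto. apply (ex_RInt_scal (V := R_CompleteNormedModule)); auto. Qed.

Lemma Q_line_y m F x : Q m F -> U m (fun t => F x t).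
Proof. intros H. pose proof (Q_line m F x 0 0 1 H) as H1.
 replace (fun t => F x t) with (fun s => F (x + 0 * s) (0 + 1 * s)); auto.
 apply functional_extensionality; intros; f_equal; ring. Qed.
Lemma Q_line_x m F y : Q m F -> U m (fun t => F t y).
Proof. intros H. pose proof (Q_line m F 0 y 1 0 H) as H1.
 replace (fun t => F t y) with (fun s => F (0 + 1 * s) (y + 0 * s)); auto.
 apply functional_extensionality; intros; f_equal; ring. Qed.

Lemma inner_formula m F : Q m F -> exists G, Q (S m) G /\
  forall x a b, RInt (fun y => F x y) a b = G x b - G x a.
Proof. intros HF. destruct (antider_y m F (Q_Pk m F HF)) as (G & HG & HD).
 exists G; split; auto. intros x a b.
 apply is_RInt_unique. apply (is_RInt_derive (fun t => G x t) (fun y => F x y)).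
 intros; apply HD. intros; eapply U_cont. apply Q_line_y; eauto. Qed.

Lemma inner_U m F : Q m F -> U (S m) (fun x => RInt (fun y => F x y) 0 (1 - x)).
Proof. intros HF. destruct (inner_formula m F HF) as (G & HG & HI).
 replace (fun x => RInt (fun y => F x y) 0 (1 - x)) with
   (fun s => 1 * G (0 + 1 * s) (1 + (-1) * s) + (-1) * G (0 + 1 * s) (0 + 0 * s)).
 apply U_lin; apply Q_line; auto.
 apply functional_extensionality; intros x. rewrite HI.
 replace (0 + 1 * x) with x by ring. replace (1 + -1 * x) with (1 - x) by ring. replace (0 + 0 * x) with 0 by ring. ring. Qed.

Lemma int_zero (f : R -> R) a b : a < b -> (forall x, continuous f x) ->
  (forall x, a <= x <= b -> 0 <= f x) -> RInt f a b = 0 -> forall x, a <= x <= b -> f x = 0.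
Proof. intros Hab Hc Hp HI x0 Hx0. destruct (Rle_lt_or_eq_dec 0 (f x0) (Hp x0 Hx0)) as [Hpos|]; auto.
 exfalso. destruct (cont_eps f x0 (Hc x0) (f x0 / 2)) as [d [Hd Hd']]. lra.
 set (c := Rmax a (x0 - d/2)). set (e := Rmin b (x0 + d/2)).
 assert (Hc1 : a <= c) by apply Rmax_l. assert (Hc2 : x0 - d/2 <= c) by apply Rmax_r.
 assert (He1 : e <= b) by apply Rmin_l. assert (He2 : e <= x0 + d/2) by apply Rmin_r.
 assert (Hce : c < e).
 { unfold c, e. apply Rmax_case; apply Rmin_case; lra. }
 assert (Hc3 : c <= x0) by (unfold c; apply Rmax_case; lra).
 assert (He3 : x0 <= e) by (unfold e; apply Rmin_case; lra).
 assert (Hex : forall u v, ex_RInt f u v) by (intros; apply (ex_RInt_continuous (V := R_CompleteNormedModule)); auto).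
 rewrite <- (RInt_Chasles f a c b), <- (RInt_Chasles f c e b) in HI; auto.
 assert (0 <= RInt f a c) by (apply RInt_ge_0; auto; intros; apply Hp; lra).
 assert (0 <= RInt f e b) by (apply RInt_ge_0; auto; intros; apply Hp; lra).
 assert (RInt (fun _ => f x0 / 2) c e <= RInt f c e).
 { apply RInt_le; [lra | apply (ex_RInt_const (V := R_CompleteNormedModule)) | auto | ]. intros x Hx.
   specialize (Hd' x ltac:(apply Rabs_def1; lra)). apply Rabs_def2 in Hd'. lra. }
 rewrite RInt_const in H1. unfold scal in H1; simpl in H1; unfold mult in H1; simpl in H1.
 change plus with Rplus in HI. 
 assert (0 < (e - c) * (f x0 / 2)) by (apply Rmult_lt_0_compat; lra). lra. Qed.

Definition QF k u := Q k (c1 u) /\ Q k (c2 u).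
Definition vlin l u m v := mkVF (fun x y => l * c1 u x y + m * c1 v x y) (fun x y => l * c2 u x y + m * c2 v x y).
Definition ip u v := fun x y => c1 u x y * c1 v x y + c2 u x y * c2 v x y.

Lemma QF_lin k u v l m : QF k u -> QF k v -> QF k (vlin l u m v).
Proof. intros [] []; split; simpl; apply Q_lin; auto. Qed.
Lemma ip_Q k u v : QF k u -> QF k v -> Q (k + k) (ip u v).
Proof. intros [] []. unfold ip. apply (Q_plus _ (fun x y => c1 u x y * c1 v x y) (fun x y => c2 u x y * c2 v x y));
 apply (Q_mul k k); auto. Qed.

Lemma L2K_ip u v : L2K u v = RInt (fun x => RInt (fun y => ip u v x y) 0 (1 - x)) 0 1.
Proof. reflexivity. Qed.

Lemma L2K_sym u v : L2K u v = L2K v u.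
Proof. unfold L2K. f_equal. fext. f_equal. fext. ring. Qed.

Lemma L2K_lin k u v w l m : QF k u -> QF k v -> QF k w ->
  L2K (vlin l u m v) w = l * L2K u w + m * L2K v w.
Proof. intros Hu Hv Hw. rewrite !L2K_ip.
 pose proof (ip_Q k u w Hu Hw) as Q1. pose proof (ip_Q k v w Hv Hw) as Q2.
 rewrite <- RInt_lin by (eapply U_exRInt, inner_U; eauto).
 f_equal. fext. rewrite <- RInt_lin by (eapply U_exRInt, Q_line_y; eauto).
 f_equal. fext. unfold ip; simpl; ring. Qed.

Lemma L2K_pos k u : QF k u -> 0 <= L2K u u.
Proof. intros Hu. pose proof (ip_Q k u u Hu Hu) as Q1. rewrite L2K_ip.
 apply RInt_ge_0. lra. eapply U_exRInt, inner_U; eauto.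
 intros x Hx. apply RInt_ge_0. lra. eapply U_exRInt, Q_line_y; eauto.
 intros; unfold ip. nra. Qed.

Lemma L2K_def k u : QF k u -> L2K u u = 0 -> forall x y, c1 u x y = 0 /\ c2 u x y = 0.
Proof. intros Hu H0. pose proof (ip_Q k u u Hu Hu) as Q1. rewrite L2K_ip in H0.
 assert (A : forall x, 0 <= x < 1 -> forall y, 0 <= y <= 1 - x -> c1 u x y = 0 /\ c2 u x y = 0).
 { intros x Hx.
   assert (Hout : RInt (fun y => ip u u x y) 0 (1 - x) = 0).
   { apply (int_zero (fun x => RInt (fun y => ip u u x y) 0 (1 - x)) 0 1); auto. lra.
     intros; eapply U_cont, inner_U; eauto.
     intros z Hz. apply RInt_ge_0. lra. eapply U_exRInt, Q_line_y; eauto. intros; unfold ip; nra. lra. }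
   intros y Hy. assert (ip u u x y = 0).
   { apply (int_zero (fun y => ip u u x y) 0 (1 - x)); auto. lra.
     intros; eapply U_cont, Q_line_y; eauto. intros; unfold ip; nra. }
   unfold ip in H. split; nra. }
 destruct Hu as [H1 H2].
 assert (B : forall (f : R -> R -> R) m, Q m f -> (forall x, 0 <= x < 1 -> forall y, 0 <= y <= 1 - x -> f x y = 0) -> forall x y, f x y = 0).
 { intros f m Hf Hz x y.
   assert (forall x, 0 <= x <= 1/2 -> forall y, f x y = 0).
   { intros x' Hx'. apply (U_zero m (fun t => f x' t) 0 (1 - x')). lra. apply Q_line_y; auto.
     intros; apply Hz; lra. }
   apply (U_zero m (fun t => f t y) 0 (1/2)). lra. apply Q_line_x; auto. intros; auto. }
 intros x y; split.
 apply (B _ k H1); intros; apply A; auto.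
 apply (B _ k H2); intros; apply A; auto. Qed.


Lemma leg0 x : legendre 0 x = 1. Proof. reflexivity. Qed.
Lemma leg1 x : legendre 1 x = x. Proof. reflexivity. Qed.
Lemma legS_snd n x : legendre (S n) x = snd (legpair n x).
Proof. unfold legendre; simpl. destruct (legpair n x); reflexivity. Qed.
Lemma leg_rec m x : legendre (S (S m)) x =
  ((2 * INR m + 3) * x * legendre (S m) x - (INR m + 1) * legendre m x) / (INR m + 2).
Proof. rewrite legS_snd, legS_snd. unfold legendre. simpl. destruct (legpair m x); reflexivity. Qed.

Lemma leg_LU n : (exists a, a > 0 /\ LU n (legendre n) a) /\ (exists a, a > 0 /\ LU (S n) (legendre (S n)) a).
Proof. induction n.
 - split. exists 1; split; [lra| reflexivity].
   exists 1; split. lra. exists 0, (fun _ => 1). split. reflexivity.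
   fext. rewrite leg1; ring.
 - destruct IHn as [[a [Ha H1]] [b [Hb H2]]]. split. exists b; auto.
   exists ((2 * INR n + 3) / (INR n + 2) * b + (- (INR n + 1) / (INR n + 2)) * 0). split.
   { pose proof (pos_INR n). rewrite Rmult_0_r, Rplus_0_r. apply Rmult_lt_0_compat; auto.
     apply Rdiv_lt_0_compat; lra. }
   replace (legendre (S (S n))) with (fun x => (2 * INR n + 3) / (INR n + 2) * (x * legendre (S n) x)
        + (- (INR n + 1) / (INR n + 2)) * legendre n x).
   apply LU_lin. apply LU_mulx; auto. apply LU_mono0. apply U_mono. eapply LU_U; eauto.
   fext. rewrite leg_rec. pose proof (pos_INR n). field. lra. Qed.

Lemma leg_U n : U n (legendre n).
Proof. destruct (leg_LU n) as [[a [_ H]] _]. eapply LU_U; eauto. Qed.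

Lemma leg_at1 n : legendre n 1 = 1 /\ legendre (S n) 1 = 1.
Proof. induction n. split; reflexivity. destruct IHn as [H1 H2]. split; auto.
 rewrite leg_rec, H1, H2. pose proof (pos_INR n). field. lra. Qed.

Definition dleg n x := Derive (legendre n) x.
Lemma dleg_is n x : is_derive (legendre n) x (dleg n x).
Proof. unfold dleg. destruct (U_derive n _ (leg_U n) x) as [l Hl].
 rewrite (is_derive_unique _ _ _ Hl); auto. Qed.
Lemma dleg_U n : U (pred n) (dleg n).
Proof. destruct n. replace (dleg 0) with (fun _ : R => 0). exists 0; auto.
 fext. unfold dleg. symmetry; apply is_derive_unique. apply U_deriv0, leg_U.
 destruct (U_deriv _ _ (leg_U (S n))) as (p' & H1 & H2).
 replace (dleg (S n)) with p'; auto. fext. unfold dleg. symmetry; apply is_derive_unique; auto. Qed.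
Lemma dleg_cont n x : continuous (dleg n) x.
Proof. eapply U_cont, dleg_U. Qed.
Lemma leg_cont n x : continuous (legendre n) x.
Proof. eapply U_cont, leg_U. Qed.

Lemma dleg0 x : dleg 0 x = 0.
Proof. apply is_derive_unique. apply (d_ext (fun _ => 1) _ x 0 0). intros; reflexivity. reflexivity. apply d_const. Qed.
Lemma dleg1 x : dleg 1 x = 1.
Proof. apply is_derive_unique. apply (d_ext (fun t => t) _ x 1 1). intros; reflexivity. reflexivity. apply d_id. Qed.
Lemma dleg_rec m x : dleg (S (S m)) x =
  ((2 * INR m + 3) * (legendre (S m) x + x * dleg (S m) x) - (INR m + 1) * dleg m x) / (INR m + 2).
Proof. apply is_derive_unique.
 pose proof (d_mult (fun t => t) (legendre (S m)) x _ _ (d_id x) (dleg_is (S m) x)) as D1.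
 pose proof (d_minus _ _ x _ _ (is_derive_scal _ x (2 * INR m + 3) _ D1) (is_derive_scal _ x (INR m + 1) _ (dleg_is m x))) as D2.
 pose proof (is_derive_scal _ x (/ (INR m + 2)) _ D2) as D3.
 pose proof (pos_INR m).
 eapply d_ext; [| | exact D3]; intros; cbv beta; req. rewrite leg_rec. field. lra. field. lra. Qed.

Lemma leg_ids m x :
  (x ^ 2 - 1) * dleg (S m) x = (INR m + 1) * (x * legendre (S m) x - legendre m x) /\
  x * dleg (S m) x - dleg m x = (INR m + 1) * legendre (S m) x.
Proof. induction m.
 - rewrite dleg1, dleg0, leg1, leg0. simpl. split; ring.
 - destruct IHm as [h1 h2]. rewrite S_INR. pose proof (pos_INR m) as Hm.
   assert (HD : dleg (S (S m)) x = (INR m + 2) * legendre (S m) x + x * dleg (S m) x).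
   { rewrite dleg_rec. replace (dleg m x) with (x * dleg (S m) x - (INR m + 1) * legendre (S m) x) by lra.
     field. lra. }
   rewrite HD, leg_rec. split.
   + replace ((x ^ 2 - 1) * ((INR m + 2) * legendre (S m) x + x * dleg (S m) x)) with
       ((x ^ 2 - 1) * (INR m + 2) * legendre (S m) x + x * ((x ^ 2 - 1) * dleg (S m) x)) by ring.
     rewrite h1. field. lra.
   + replace (x * ((INR m + 2) * legendre (S m) x + x * dleg (S m) x) - dleg (S m) x) with
       ((INR m + 2) * x * legendre (S m) x + (x ^ 2 - 1) * dleg (S m) x) by ring.
     rewrite h1. field. lra. Qed.

Lemma W_deriv n x : is_derive (fun t => (1 - t ^ 2) * dleg n t) x (- (INR n * (INR n + 1)) * legendre n x).
Proof. destruct n.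
 - eapply d_ext; [| | apply (d_const 0)]. intros; cbv beta; rewrite dleg0; ring. simpl; ring.
 - pose proof (is_derive_scal _ x (INR n + 1) _ (d_minus _ _ x _ _ (dleg_is n x) (d_mult _ _ x _ _ (d_id x) (dleg_is (S n) x)))) as D.
   eapply d_ext; [| | exact D].
   intros t. destruct (leg_ids n t) as [h1 _]. cbv beta.
   replace ((1 - t ^ 2) * dleg (S n) t) with (- ((t ^ 2 - 1) * dleg (S n) t)) by ring. rewrite h1. ring.
   destruct (leg_ids n x) as [_ h2]. rewrite S_INR.
   replace (dleg n x - (1 * legendre (S n) x + x * dleg (S n) x)) with (- (x * dleg (S n) x - dleg n x) - legendre (S n) x) by ring.
   rewrite h2. ring. Qed.

Lemma c_mult (f g : R -> R) x : continuous f x -> continuous g x -> continuous (fun t => f t * g t) x.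
Proof. intros; apply (continuous_mult f g); auto. Qed.
Lemma c_plus (f g : R -> R) x : continuous f x -> continuous g x -> continuous (fun t => f t + g t) x.
Proof. intros; apply (continuous_plus f g); auto. Qed.
Lemma c_const (c x : R) : continuous (fun _ => c) x.
Proof. apply continuous_const. Qed.
Lemma c_id (x : R) : continuous (fun t => t) x.
Proof. apply continuous_id. Qed.
Lemma c_ext (f g : R -> R) x : (forall t, f t = g t) -> continuous f x -> continuous g x.
Proof. intros H; replace g with f; auto. fext; auto. Qed.
Lemma cont_exRInt (f : R -> R) a b : (forall x, continuous f x) -> ex_RInt f a b.
Proof. intros; apply (ex_RInt_continuous (V := R_CompleteNormedModule)); auto. Qed.

Lemma leg_orth n m : n <> m -> RInt (fun x => legendre n x * legendre m x) (-1) 1 = 0.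
Proof. intros Hnm.
 assert (Key : forall n m, RInt (fun x => (- (INR n * (INR n + 1))) * (legendre n x * legendre m x) + 1 * ((1 - x ^ 2) * dleg n x * dleg m x)) (-1) 1 = 0).
 { clear. intros n m. apply is_RInt_unique.
   replace 0 with (minus ((1 - 1 ^ 2) * dleg n 1 * legendre m 1) ((1 - (-1) ^ 2) * dleg n (-1) * legendre m (-1))).
   2: { unfold minus, plus, opp; simpl. ring. }
   apply (is_RInt_derive (fun t => (1 - t ^ 2) * dleg n t * legendre m t)).
   - intros x _. pose proof (d_mult _ _ x _ _ (W_deriv n x) (dleg_is m x)) as D.
     eapply d_ext; [| | exact D]; intros; cbv beta; req; ring.
   - intros x _. apply c_plus. apply c_mult. apply c_const. apply c_mult; apply leg_cont.
     apply c_mult. apply c_const. apply c_mult. apply c_mult. apply c_plus. apply c_const.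
     apply (c_ext (fun t => - 1 * (t * (t * 1)))). intros; simpl; ring.
     apply c_mult. apply c_const. apply c_mult. apply c_id. apply c_mult. apply c_id. apply c_const.
     apply dleg_cont. apply dleg_cont. }
 assert (Ex1 : forall n m, ex_RInt (fun x => legendre n x * legendre m x) (-1) 1).
 { intros; apply cont_exRInt; intros; apply c_mult; apply leg_cont. }
 assert (Ex2 : forall n m, ex_RInt (fun x => (1 - x ^ 2) * dleg n x * dleg m x) (-1) 1).
 { intros; apply cont_exRInt; intros. apply c_mult. apply c_mult. apply c_plus. apply c_const.
     apply (c_ext (fun t => - 1 * (t * (t * 1)))). intros; simpl; ring.
     apply c_mult. apply c_const. apply c_mult. apply c_id. apply c_mult. apply c_id. apply c_const.
     apply dleg_cont. apply dleg_cont. }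
 pose proof (Key n m) as K1. pose proof (Key m n) as K2.
 rewrite RInt_lin in K1, K2 by auto.
 replace (RInt (fun x => (1 - x ^ 2) * dleg m x * dleg n x) (-1) 1) with (RInt (fun x => (1 - x ^ 2) * dleg n x * dleg m x) (-1) 1) in K2.
 2: { f_equal; fext; ring. }
 replace (RInt (fun x => legendre m x * legendre n x) (-1) 1) with (RInt (fun x => legendre n x * legendre m x) (-1) 1) in K2.
 2: { f_equal; fext; ring. }
 assert (INR n * (INR n + 1) <> INR m * (INR m + 1)).
 { intros E. apply Hnm. pose proof (pos_INR n); pose proof (pos_INR m).
   destruct (Nat.lt_trichotomy n m) as [L|[L|L]]; auto; apply lt_INR in L; nra. }
 apply (Rmult_eq_reg_l (INR n * (INR n + 1) - INR m * (INR m + 1))). lra. lra. Qed.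


Lemma sqrt2_pos : 0 < sqrt 2.
Proof. apply sqrt_lt_R0; lra. Qed.
Lemma elen_pos f : 0 < elen f.
Proof. destruct f; simpl; try lra; apply sqrt2_pos. Qed.

Lemma leg_edge_U f i : U i (leg_edge f i).
Proof. unfold leg_edge.
 replace (fun s => legendre i (2 * s / elen f - 1)) with (fun s => legendre i (2 / elen f * s + -1)).
 apply U_aff, leg_U. fext. f_equal. pose proof (elen_pos f). field. lra. Qed.
Lemma leg_edge_cont f i s : continuous (leg_edge f i) s.
Proof. eapply U_cont, leg_edge_U. Qed.
Lemma leg_edge_LU f i : exists a, a <> 0 /\ LU i (leg_edge f i) a.
Proof. destruct (leg_LU i) as [[a [Ha H]] _]. exists (a * (2 / elen f) ^ i). split.
 apply Rmult_integral_contrapositive; split. lra. apply pow_nonzero. pose proof (elen_pos f).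
 apply Rgt_not_eq. apply Rdiv_lt_0_compat; lra.
 unfold leg_edge.
 replace (fun s => legendre i (2 * s / elen f - 1)) with (fun s => legendre i (2 / elen f * s + -1)).
 apply LU_aff; auto. fext. f_equal. pose proof (elen_pos f). field. lra. Qed.

Lemma leg_edge_orth f i j : i <> j ->
  RInt (fun s => leg_edge f i s * leg_edge f j s) 0 (elen f) = 0.
Proof. intros Hij. pose proof (elen_pos f) as HL.
 pose proof (RInt_comp_lin (fun x => legendre i x * legendre j x) (2 / elen f) (-1) 0 (elen f)
   (cont_exRInt _ _ _ (fun x => c_mult _ _ x (leg_cont i x) (leg_cont j x)))) as E.
 replace (2 / elen f * 0 + -1) with (-1) in E by ring.
 replace (2 / elen f * elen f + -1) with 1 in E by (field; lra).
 assert (E2 : 2 / elen f * RInt (fun s => leg_edge f i s * leg_edge f j s) 0 (elen f) = RInt (fun x => legendre i x * legendre j x) (-1) 1).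
 { rewrite <- E. rewrite <- (RInt_scal (V := R_CompleteNormedModule)). apply RInt_ext. intros x _.
   unfold leg_edge, scal; simpl. unfold mult; simpl.
   replace (2 * x / elen f - 1) with (2 / elen f * x + -1) by (field; lra). reflexivity.
   apply cont_exRInt; intros; apply c_mult; apply leg_edge_cont. }
 rewrite leg_orth in E2 by auto.
 apply Rmult_integral in E2. destruct E2 as [E2|E2]; auto.
 exfalso. assert (0 < 2 / elen f) by (apply Rdiv_lt_0_compat; lra). lra. Qed.

Definition Nleg f i := RInt (fun t => (leg_edge f i t) ^ 2) 0 (elen f).
Lemma Nleg_pos f i : 0 < Nleg f i.
Proof. pose proof (elen_pos f) as HL. unfold Nleg.
 assert (0 <= RInt (fun t => leg_edge f i t ^ 2) 0 (elen f)).
 { apply RInt_ge_0. lra. apply cont_exRInt; intros. apply (c_ext (fun t => leg_edge f i t * (leg_edge f i t * 1))).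
   intros; simpl; ring. apply c_mult. apply leg_edge_cont. apply c_mult. apply leg_edge_cont. apply c_const.
   intros; apply pow2_ge_0. }
 destruct H; auto. exfalso.
 assert (leg_edge f i (elen f) ^ 2 = 0).
 { apply (int_zero (fun t => leg_edge f i t ^ 2) 0 (elen f)); auto. intros.
   apply (c_ext (fun t => leg_edge f i t * (leg_edge f i t * 1))).
   intros; simpl; ring. apply c_mult. apply leg_edge_cont. apply c_mult. apply leg_edge_cont. apply c_const.
   intros; apply pow2_ge_0. lra. }
 unfold leg_edge in H0. replace (2 * elen f / elen f - 1) with 1 in H0 by (field; lra).
 destruct (leg_at1 i) as [H1 _]. rewrite H1 in H0. lra. Qed.
Lemma Nleg0 f : Nleg f 0 = elen f.
Proof. unfold Nleg, leg_edge. rewrite (RInt_ext _ (fun _ => 1)). rewrite RInt_const.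
 unfold scal; simpl; unfold mult; simpl; req; ring. intros; rewrite leg0; req; ring. Qed.

Lemma RInt_sumR (g : nat -> R -> R) n a b : (forall j, ex_RInt (g j) a b) ->
  RInt (fun s => sumR (fun j => g j s) n) a b = sumR (fun j => RInt (g j) a b) n.
Proof. intros H; induction n; simpl.
 - rewrite RInt_const. unfold scal; simpl; unfold mult; simpl; ring.
 - rewrite <- IHn. rewrite <- (RInt_plus (V := R_CompleteNormedModule)); auto.
   clear IHn; induction n; simpl. apply (ex_RInt_const (V := R_CompleteNormedModule)).
   apply (ex_RInt_plus (V := R_CompleteNormedModule)); auto. Qed.

Lemma edge_coef f k (a : nat -> R) (p : R -> R) :
  (forall s, p s = sumR (fun j => a j * leg_edge f j s) (S k)) ->
  forall i, (i <= k)%nat -> RInt (fun s => p s * leg_edge f i s) 0 (elen f) = a i * Nleg f i.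
Proof. intros Hp i Hi.
 rewrite (RInt_ext _ (fun s => sumR (fun j => a j * (leg_edge f j s * leg_edge f i s)) (S k))).
 2: { intros; rewrite Hp. rewrite Rmult_comm, <- sumR_scal. apply sumR_ext; intros; ring. }
 rewrite RInt_sumR.
 2: { intros j. apply cont_exRInt; intros. apply c_mult. apply c_const. apply c_mult; apply leg_edge_cont. }
 rewrite (sumR_ext _ (fun j => if Nat.eqb j i then a i * Nleg f i else 0)).
 - clear Hp. assert (i < S k)%nat as Hi' by lia. revert Hi'. generalize (S k). intros n Hn.
   induction n. lia. simpl. destruct (Nat.eqb_spec n i).
   + subst. rewrite (sumR_zero_ext _ i). ring. intros j Hj. destruct (Nat.eqb_spec j i); [lia|auto].
   + rewrite IHn by lia. ring.
 - intros j Hj. destruct (Nat.eqb_spec j i).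
   + subst. rewrite (RInt_scal (V := R_CompleteNormedModule)). unfold Nleg, scal; simpl; unfold mult; simpl.
     f_equal. f_equal. fext. ring.
     apply cont_exRInt; intros; apply c_mult; apply leg_edge_cont.
   + rewrite (RInt_scal (V := R_CompleteNormedModule)). unfold scal; simpl; unfold mult; simpl.
     rewrite leg_edge_orth; auto. ring.
     apply cont_exRInt; intros; apply c_mult; apply leg_edge_cont. Qed.

Lemma edge_span f k p : U k p -> exists a : nat -> R, forall s, p s = sumR (fun j => a j * leg_edge f j s) (S k).
Proof. intros Hp.
 destruct (U_span k p (leg_edge f) (fun j => proj1_sig (constructive_indefinite_description _ (leg_edge_LU f j)))) as [a Ha]; auto.
 intros j _. destruct (constructive_indefinite_description _ (leg_edge_LU f j)) as [l [Hl1 Hl2]]; simpl; auto.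
 exists a; auto. Qed.

Lemma edge_zero f k p : U k p ->
  (forall j, (j <= k)%nat -> RInt (fun s => p s * leg_edge f j s) 0 (elen f) = 0) ->
  forall s, 0 <= s <= elen f -> p s = 0.
Proof. intros Hp H. destruct (edge_span f k p Hp) as [a Ha].
 assert (Hpp : RInt (fun s => p s * p s) 0 (elen f) = 0).
 { rewrite (RInt_ext _ (fun s => sumR (fun j => a j * (p s * leg_edge f j s)) (S k))).
   2: { intros; rewrite Ha at 2. rewrite <- sumR_scal. apply sumR_ext; intros; ring. }
   rewrite RInt_sumR.
   2: { intros j. apply cont_exRInt; intros. apply c_mult. apply c_const. apply c_mult. eapply U_cont; eauto. apply leg_edge_cont. }
   apply sumR_zero_ext. intros j Hj. rewrite (RInt_scal (V := R_CompleteNormedModule)).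
   unfold scal; simpl; unfold mult; simpl. rewrite H by lia. ring.
   apply cont_exRInt; intros. apply c_mult. eapply U_cont; eauto. apply leg_edge_cont. }
 intros s Hs. pose proof (elen_pos f).
 assert (p s * p s = 0).
 { apply (int_zero (fun s => p s * p s) 0 (elen f)); auto. intros; apply c_mult; eapply U_cont; eauto.
   intros; nra. }
 nra. Qed.


Definition ex0 f := match f with Ebot => 0 | Ehyp => 1 | Eleft => 0 end.
Definition ey0 f := match f with Ebot => 0 | Ehyp => 0 | Eleft => 1 end.
Definition ea f := match f with Ebot => 1 | Ehyp => - / sqrt 2 | Eleft => 0 end.
Definition eb f := match f with Ebot => 0 | Ehyp => / sqrt 2 | Eleft => -1 end.

Lemma epx_eq f s : epx f s = ex0 f + ea f * s.
Proof. destruct f; simpl; try unfold Rdiv; ring. Qed.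
Lemma epy_eq f s : epy f s = ey0 f + eb f * s.
Proof. destruct f; simpl; try unfold Rdiv; ring. Qed.
Lemma enx_eq f : enx f = eb f. Proof. destruct f; reflexivity. Qed.
Lemma eny_eq f : eny f = - ea f. Proof. destruct f; simpl; ring. Qed.

Lemma ntrace_eq u f s : ntrace u f s =
  c1 u (ex0 f + ea f * s) (ey0 f + eb f * s) * eb f - c2 u (ex0 f + ea f * s) (ey0 f + eb f * s) * ea f.
Proof. unfold ntrace. rewrite (epx_eq f s), (epy_eq f s), (enx_eq f), (eny_eq f). ring. Qed.

Lemma tr_U k u f : QF k u -> U k (ntrace u f).
Proof. intros [H1 H2].
 replace (ntrace u f) with (fun s => eb f * c1 u (ex0 f + ea f * s) (ey0 f + eb f * s) + (- ea f) * c2 u (ex0 f + ea f * s) (ey0 f + eb f * s)).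
 apply U_lin; apply Q_line; auto. fext. rewrite ntrace_eq; ring. Qed.
Lemma tr_cont k u f s : QF k u -> continuous (ntrace u f) s.
Proof. intros; eapply U_cont, tr_U; eauto. Qed.

Definition curl (psi : R -> R -> R) : VF := mkVF (py psi) (fun x y => - px psi x y).

Lemma tr_curl psi : CR psi -> forall f s, is_derive (fun s => psi (epx f s) (epy f s)) s (ntrace (curl psi) f s).
Proof. intros H f s. pose proof (H (ex0 f) (ey0 f) (ea f) (eb f) s) as D.
 eapply d_ext; [| | exact D]. intros; rewrite epx_eq, epy_eq; reflexivity.
 rewrite ntrace_eq. simpl. req; ring. Qed.

Lemma RInt_zero_fun (p : R -> R) a b : RInt (fun s => p s * 0) a b = 0.
Proof. rewrite (RInt_ext _ (fun _ => 0)). rewrite RInt_const. unfold scal; simpl; unfold mult; simpl; req; ring.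
 intros; req; ring. Qed.

Lemma L2B_scrL (p : bfun) g j : (forall s, continuous (p g) s) ->
  L2B p (scrL g j) = RInt (fun s => p g s * leg_edge g j s) 0 (elen g) / sqrt (Nleg g j).
Proof. intros Hc.
 assert (E : RInt (fun s => p g s * scrL g j g s) 0 (elen g) = RInt (fun s => p g s * leg_edge g j s) 0 (elen g) / sqrt (Nleg g j)).
 { unfold scrL. replace (edge_eqb g g) with true by (destruct g; reflexivity).
   unfold Rdiv. rewrite Rmult_comm. rewrite <- (RInt_scal (V := R_CompleteNormedModule)).
   f_equal. fext. unfold scal; simpl; unfold mult; simpl. replace (RInt (fun t => leg_edge g j t * (leg_edge g j t * 1)) 0 (elen g)) with (Nleg g j) by (unfold Nleg; f_equal; fext; ring). req; field. apply Rgt_not_eq, sqrt_lt_R0, Nleg_pos.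
   apply cont_exRInt; intros; apply c_mult; auto; apply leg_edge_cont. }
 unfold L2B, edges. simpl. rewrite <- E.
 destruct g; unfold scrL; simpl; rewrite ?RInt_zero_fun; ring. Qed.


Definition DS (k : nat) (T : nat -> nat -> R -> R -> R) : R -> R -> R :=
  fun x y => sumR (fun i => sumR (fun j => T i j x y) (S k - i)) (S k).

Lemma Q_term m C a b : (a + b <= m)%nat -> Q m (fun x y => C * x ^ a * y ^ b).
Proof. intros H. apply Q_mono_le' with (a + b)%nat; auto.
 replace (fun x y => C * x ^ a * y ^ b) with (fun x y => C * (x ^ a * y ^ b)) by (fext; ring).
 apply Q_scal, (Q_mul a b (fun x y => x ^ a) (fun x y => y ^ b)). apply Q_powx. apply Q_powy. Qed.

Lemma Q_DS m k T : (forall i j, (i <= k)%nat -> (i + j <= k)%nat -> Q m (T i j)) -> Q m (DS k T).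
Proof. intros H. unfold DS.
 apply (Q_sum m (fun i x y => sumR (fun j => T i j x y) (S k - i))). intros i Hi.
 apply (Q_sum m (fun j x y => T i j x y)). intros j Hj. apply H; lia. Qed.

Lemma d_DS_y k T T' x y : (forall i j, is_derive (fun t => T i j x t) y (T' i j x y)) ->
  is_derive (fun t => DS k T x t) y (DS k T' x y).
Proof. intros H. unfold DS.
 apply (d_sumR (fun i t => sumR (fun j => T i j x t) (S k - i))). intros i _.
 apply (d_sumR (fun j t => T i j x t)). intros; auto. Qed.
Lemma d_DS_x k T T' x y : (forall i j, is_derive (fun t => T i j t y) x (T' i j x y)) ->
  is_derive (fun t => DS k T t y) x (DS k T' x y).
Proof. intros H. unfold DS.
 apply (d_sumR (fun i t => sumR (fun j => T i j t y) (S k - i))). intros i _.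
 apply (d_sumR (fun j t => T i j t y)). intros; auto. Qed.
Lemma d_DS_diag k T T' x : (forall i j, is_derive (fun t => T i j t (1 - t)) x (T' i j x (1 - x))) ->
  is_derive (fun t => DS k T t (1 - t)) x (DS k T' x (1 - x)).
Proof. intros H. unfold DS.
 apply (d_sumR (fun i t => sumR (fun j => T i j t (1 - t)) (S k - i))). intros i _.
 apply (d_sumR (fun j t => T i j t (1 - t))). intros; auto. Qed.

Lemma DS_lin k T1 T2 l m : (fun x y => l * DS k T1 x y + m * DS k T2 x y) = DS k (fun i j x y => l * T1 i j x y + m * T2 i j x y).
Proof. fext. unfold DS. rewrite <- !sumR_scal, <- sumR_plus. apply sumR_ext; intros.
 rewrite <- !sumR_scal, <- sumR_plus. apply sumR_ext; intros. ring. Qed.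

Lemma d_pow_id i x : is_derive (fun t => t ^ i) x (INR i * x ^ pred i).
Proof. pose proof (is_derive_pow (fun t => t) i x 1 (d_id x)) as D.
 eapply d_ext; [| | exact D]; intros; cbv beta; req; ring. Qed.

Lemma cont_line m F x0 a y0 b : Q m F -> forall s, continuous (fun s => F (x0 + a * s) (y0 + b * s)) s.
Proof. intros H s; eapply U_cont, Q_line; eauto. Qed.
Lemma cont_diag m F s : Q m F -> continuous (fun x => F x (1 - x)) s.
Proof. intros H. apply (c_ext (fun s => F (0 + 1 * s) (1 + -1 * s))).
 intros; f_equal; ring. eapply cont_line; eauto. Qed.
Lemma cont_bot m F s : Q m F -> continuous (fun x => F x 0) s.
Proof. intros H. apply (c_ext (fun s => F (0 + 1 * s) (0 + 0 * s))).
 intros; f_equal; ring. eapply cont_line; eauto. Qed.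
Lemma cont_left m F s : Q m F -> continuous (fun y => F 0 y) s.
Proof. intros H. apply (c_ext (fun s => F (0 + 0 * s) (0 + 1 * s))).
 intros; f_equal; ring. eapply cont_line; eauto. Qed.

Lemma deriv0_const (h : R -> R) a b : (forall t, is_derive h t 0) -> h b = h a.
Proof. intros H. assert (E : is_RInt (fun _ => 0) a b (minus (h b) (h a))).
 { apply (is_RInt_derive h (fun _ => 0)); intros; auto. apply c_const. }
 apply (is_RInt_unique (V := R_CompleteNormedModule)) in E. rewrite RInt_const in E. unfold scal, minus, plus, opp in E; simpl in E.
 unfold mult in E; simpl in E. lra. Qed.

Lemma flux_zero k u : is_Pk2 k u -> div_free u ->
  RInt (ntrace u Ebot) 0 (elen Ebot) + RInt (ntrace u Ehyp) 0 (elen Ehyp) + RInt (ntrace u Eleft) 0 (elen Eleft) = 0.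
Proof. intros [[c Hc] Hu2] Hdiv.
 assert (E1 : c1 u = DS k (fun i j x y => c i j * x ^ i * y ^ j)) by (fext; apply Hc).
 pose proof (Pk_Q _ _ (ex_intro _ c Hc)) as Q1. pose proof (Pk_Q _ _ Hu2) as Q2.
 set (u1 := c1 u) in *. set (u2 := c2 u) in *.
 set (G := DS k (fun i j x y => c i j * x ^ i * (y ^ S j / INR (S j)))).
 set (Gx := DS k (fun i j x y => c i j * (INR i * x ^ pred i) * (y ^ S j / INR (S j)))).
 set (U1x := DS k (fun i j x y => c i j * (INR i * x ^ pred i) * y ^ j)).
 assert (QG : Q (S k) G).
 { apply Q_DS. intros i j Hi Hij.
   replace (fun x y => c i j * x ^ i * (y ^ S j / INR (S j))) with (fun x y => (c i j / INR (S j)) * x ^ i * y ^ S j) by (fext; field; apply not_0_INR; lia).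
   apply Q_term; lia. }
 assert (QGx : Q (S k) Gx).
 { apply Q_DS. intros i j Hi Hij.
   replace (fun x y => c i j * (INR i * x ^ pred i) * (y ^ S j / INR (S j))) with (fun x y => (c i j * INR i / INR (S j)) * x ^ pred i * y ^ S j) by (fext; field; apply not_0_INR; lia).
   apply Q_term; lia. }
 assert (DGy : forall x y, is_derive (fun t => G x t) y (u1 x y)).
 { intros x y. rewrite E1. apply d_DS_y. intros i j.
   pose proof (is_derive_scal _ y (c i j * x ^ i / INR (S j)) _ (d_pow_id (S j) y)) as D.
   eapply d_ext; [| | exact D]; intros; cbv beta; req. field; apply not_0_INR; lia. simpl pred. field; apply not_0_INR; lia. }
 assert (DGxy : forall x y, is_derive (fun t => Gx x t) y (U1x x y)).
 { intros x y. apply d_DS_y. intros i j.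
   pose proof (is_derive_scal _ y (c i j * (INR i * x ^ pred i) / INR (S j)) _ (d_pow_id (S j) y)) as D.
   eapply d_ext; [| | exact D]; intros; cbv beta; req. field; apply not_0_INR; lia. simpl pred. field; apply not_0_INR; lia. }
 assert (Du1x : forall x y, px u1 x y = U1x x y).
 { intros x y. unfold px. apply is_derive_unique. rewrite E1. apply d_DS_x. intros i j.
   pose proof (is_derive_scal _ x (c i j * y ^ j) _ (d_pow_id i x)) as D.
   eapply d_ext; [| | exact D]; intros; cbv beta; req; ring. }
 assert (DK : forall x, is_derive (fun t => G t (1 - t)) x (Gx x (1 - x) - u1 x (1 - x))).
 { intros x. rewrite E1. unfold Gx. rewrite (DS_lin k _ _ 1 (-1)) in |- * || idtac.
   replace (DS k (fun i j x y => c i j * (INR i * x ^ pred i) * (y ^ S j / INR (S j))) x (1 - x) -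
     DS k (fun i j x y => c i j * x ^ i * y ^ j) x (1 - x)) with
     (DS k (fun i j x y => 1 * (c i j * (INR i * x ^ pred i) * (y ^ S j / INR (S j))) + (-1) * (c i j * x ^ i * y ^ j)) x (1 - x)).
   2: { rewrite <- DS_lin. ring. }
   apply d_DS_diag. intros i j.
   pose proof (d_pow_id i x) as D1.
   pose proof (is_derive_pow (fun t => 1 - t) (S j) x (-1)) as D2.
   assert (D0 : is_derive (fun t => 1 - t) x (-1)).
   { pose proof (d_minus _ _ x _ _ (d_const 1 x) (d_id x)) as D. eapply d_ext; [| | exact D]; intros; cbv beta; req; ring. }
   specialize (D2 D0).
   pose proof (is_derive_scal _ x (c i j / INR (S j)) _ (d_mult _ _ x _ _ D1 D2)) as D.
   eapply d_ext; [| | exact D]; intros; cbv beta; req. field; apply not_0_INR; lia.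
   simpl pred. rewrite S_INR. field. pose proof (pos_INR j); lra. }
 assert (HG0 : forall x, G x 0 = 0).
 { intros x. unfold G, DS. apply sumR_zero_ext; intros. apply sumR_zero_ext; intros. rewrite pow_i by lia. unfold Rdiv; ring. }
 assert (HGx0 : forall x, Gx x 0 = 0).
 { intros x. unfold Gx, DS. apply sumR_zero_ext; intros. apply sumR_zero_ext; intros. rewrite pow_i by lia. unfold Rdiv; ring. }
 assert (Star : forall x, Gx x (1 - x) + u2 x (1 - x) = u2 x 0).
 { intros x.
   assert (HD : forall t, is_derive (fun y => Gx x y + u2 x y) t 0).
   { intros t. pose proof (d_plus _ _ t _ _ (DGxy x t) (CR_py u2 (Q_CR _ _ Q2) x t)) as D.
     eapply d_ext; [| | exact D]; intros; cbv beta; auto.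
     specialize (Hdiv x t). unfold divg in Hdiv. fold u1 u2 in Hdiv. fold (px u1 x t) in Hdiv.
     fold (py u2 x t) in Hdiv. rewrite Du1x in Hdiv. req; lra. }
   pose proof (deriv0_const _ 0 (1 - x) HD) as H. cbv beta in H. rewrite HGx0 in H. lra. }
 assert (I1 : RInt (fun x => Gx x (1 - x) - u1 x (1 - x)) 0 1 = - G 0 1).
 { apply is_RInt_unique. replace (- G 0 1) with (minus (G 1 (1 - 1)) (G 0 (1 - 0))).
   apply (is_RInt_derive (fun t => G t (1 - t))). intros; apply DK.
   intros. apply (c_ext (fun x => 1 * Gx x (1 - x) + (-1) * u1 x (1 - x))). intros; ring.
   apply c_plus; apply c_mult; try apply c_const; eapply cont_diag; eauto.
   unfold minus, plus, opp; simpl. replace (1 - 1) with 0 by ring. rewrite HG0. replace (1 - 0) with 1 by ring. ring. }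
 assert (I2 : RInt (fun y => u1 0 y) 0 1 = G 0 1).
 { apply is_RInt_unique. replace (G 0 1) with (minus (G 0 1) (G 0 0)).
   apply (is_RInt_derive (fun t => G 0 t)). intros; apply DGy. intros; eapply cont_left; eauto.
   unfold minus, plus, opp; simpl. rewrite HG0. ring. }
 assert (Ex : forall (h : R -> R), (forall s, continuous h s) -> forall a b, ex_RInt h a b).
 { intros; apply cont_exRInt; auto. }
 assert (Fb : RInt (ntrace u Ebot) 0 (elen Ebot) = - RInt (fun x => u2 x 0) 0 1).
 { simpl elen. rewrite <- (RInt_opp (V := R_CompleteNormedModule)). apply RInt_ext. intros.
   unfold ntrace; simpl. unfold opp; simpl. fold u1 u2. req; ring.
   apply Ex. intros; eapply cont_bot; eauto. }
 assert (Fl : RInt (ntrace u Eleft) 0 (elen Eleft) = - RInt (fun y => u1 0 y) 0 1).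
 { simpl elen. pose proof (RInt_comp_lin (fun y => u1 0 y) (-1) 1 0 1 (Ex _ (fun s => cont_left _ _ s Q1) _ _)) as E.
   replace (-1 * 0 + 1) with 1 in E by ring. replace (-1 * 1 + 1) with 0 in E by ring.
   rewrite <- (opp_RInt_swap (V := R_CompleteNormedModule) (fun y => u1 0 y) 0 1) in E by (apply Ex; intros; eapply cont_left; eauto).
   unfold opp in E; simpl in E. rewrite <- E. apply RInt_ext. intros. unfold ntrace, scal; simpl. unfold mult; simpl.
   fold u1 u2. replace (-1 * x + 1) with (1 - x) by ring. req; ring. }
 assert (Fh : RInt (ntrace u Ehyp) 0 (elen Ehyp) = RInt (fun x => u1 x (1 - x) + u2 x (1 - x)) 0 1).
 { simpl elen. pose proof sqrt2_pos as Hs.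
   set (phi := fun t => u1 (1 - t) t + u2 (1 - t) t).
   assert (Cphi : forall s, continuous phi s).
   { intros s. unfold phi. apply c_plus.
     apply (c_ext (fun s => u1 (1 + -1 * s) (0 + 1 * s))). intros; f_equal; ring. eapply cont_line; eauto.
     apply (c_ext (fun s => u2 (1 + -1 * s) (0 + 1 * s))). intros; f_equal; ring. eapply cont_line; eauto. }
   pose proof (RInt_comp_lin phi (/ sqrt 2) 0 0 (sqrt 2) (Ex _ Cphi _ _)) as E.
   replace (/ sqrt 2 * 0 + 0) with 0 in E by ring. replace (/ sqrt 2 * sqrt 2 + 0) with 1 in E by (field; lra).
   pose proof (RInt_comp_lin phi (-1) 1 0 1 (Ex _ Cphi _ _)) as E'.
   replace (-1 * 0 + 1) with 1 in E' by ring. replace (-1 * 1 + 1) with 0 in E' by ring.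
   rewrite <- (opp_RInt_swap (V := R_CompleteNormedModule) phi 0 1) in E' by auto.
   transitivity (RInt phi 0 1).
   - rewrite <- E. apply RInt_ext. intros. unfold ntrace, scal, phi; simpl. unfold mult; simpl. fold u1 u2.
     replace (1 - / sqrt 2 * x) with (1 - x / sqrt 2) by (field; lra). replace (/ sqrt 2 * x + 0) with (x / sqrt 2) by (field; lra).
     req; ring.
   - unfold opp in E'; simpl in E'. rewrite <- (Ropp_involutive (RInt phi 0 1)), <- E'.
     rewrite <- (RInt_opp (V := R_CompleteNormedModule)). apply RInt_ext. intros. unfold opp, scal, phi; simpl; unfold mult; simpl.
     replace (1 - (-1 * x + 1)) with x by ring. replace (-1 * x + 1) with (1 - x) by ring. req; ring.
     apply Ex. intros. apply (c_ext (fun t => -1 * phi (-1 * t + 1))). intros; reflexivity.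
     apply c_mult. apply c_const. apply (c_ext (fun t => phi (1 - t))). intros; f_equal; ring.
     unfold phi. apply c_plus.
     apply (c_ext (fun s => u1 (0 + 1 * s) (1 + -1 * s))). intros; f_equal; ring. eapply cont_line; eauto.
     apply (c_ext (fun s => u2 (0 + 1 * s) (1 + -1 * s))). intros; f_equal; ring. eapply cont_line; eauto. }
 rewrite Fb, Fl, Fh.
 rewrite (RInt_ext (fun x => u1 x (1 - x) + u2 x (1 - x)) (fun x => 1 * (u1 x (1 - x) - Gx x (1 - x)) + 1 * u2 x 0)).
 2: { intros x _. rewrite <- (Star x). req; ring. }
 rewrite RInt_lin. rewrite (RInt_ext (fun x => u1 x (1 - x) - Gx x (1 - x)) (fun x => -1 * (Gx x (1 - x) - u1 x (1 - x)) + 0 * 0)).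
 2: { intros; req; ring. }
 rewrite RInt_lin, I1, I2. ring.
 all: try (apply Ex; intros; apply (c_ext (fun x => 1 * Gx x (1 - x) + (-1) * u1 x (1 - x))); [intros; ring|];
   apply c_plus; apply c_mult; try apply c_const; eapply cont_diag; eauto).
 all: try (apply Ex; intros; apply c_const).
 all: try (apply Ex; intros; eapply cont_bot; eauto).
 apply Ex; intros. apply (c_ext (fun x => 1 * u1 x (1 - x) + (-1) * Gx x (1 - x))). intros; ring.
 apply c_plus; apply c_mult; try apply c_const; eapply cont_diag; eauto. Qed.


Lemma VF_eq u v : (forall x y, c1 u x y = c1 v x y) -> (forall x y, c2 u x y = c2 v x y) -> u = v.
Proof. destruct u, v; simpl; intros. f_equal; fext; auto. Qed.
Ltac vfeq := apply VF_eq; intros; simpl; ring.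

Fixpoint in_span (es : list VF) (w : VF) : Prop :=
  match es with
  | nil => w = vzero
  | e :: es' => exists a s, in_span es' s /\ w = vlin a e 1 s
  end.

Lemma span_zero es : in_span es vzero.
Proof. induction es; simpl; auto. exists 0, vzero; split; auto. vfeq. Qed.
Lemma span_lin es u v l m : in_span es u -> in_span es v -> in_span es (vlin l u m v).
Proof. revert u v; induction es; simpl; intros u v Hu Hv.
 - subst. vfeq.
 - destruct Hu as (a1 & s1 & H1 & ->), Hv as (a2 & s2 & H2 & ->).
   exists (l * a1 + m * a2), (vlin l s1 m s2); split; auto. vfeq. Qed.
Lemma span_In es e : In e es -> in_span es e.
Proof. induction es; simpl; intros H. destruct H.
 destruct H as [->|H]. exists 1, vzero; split. apply span_zero. destruct e; vfeq.
 exists 0, e; split; auto. vfeq. Qed.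

Lemma L2K_lin_r k u v w l m : QF k u -> QF k v -> QF k w ->
  L2K w (vlin l u m v) = l * L2K w u + m * L2K w v.
Proof. intros. rewrite L2K_sym, (L2K_lin k); auto. rewrite (L2K_sym u), (L2K_sym v); auto. Qed.

Lemma L2K_zero u : L2K u vzero = 0.
Proof. unfold L2K. simpl. rewrite (RInt_ext _ (fun _ => 0)). rewrite RInt_const.
 unfold scal; simpl; unfold mult; simpl; req; ring.
 intros x _. rewrite (RInt_ext _ (fun _ => 0)). rewrite RInt_const.
 unfold scal; simpl; unfold mult; simpl; req; ring. intros; req; ring. Qed.

Lemma CS0 k x r : QF k x -> QF k r -> L2K r r = 0 -> L2K x r = 0.
Proof. intros Hx Hr H0. destruct (Req_dec (L2K x r) 0); auto. exfalso.
 set (t := - (L2K x x + 1) / (2 * L2K x r)).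
 pose proof (L2K_pos k (vlin 1 x t r) (QF_lin k x r 1 t Hx Hr)) as P.
 rewrite (L2K_lin k) in P by (auto; apply QF_lin; auto).
 rewrite !(L2K_lin_r k) in P by auto. rewrite (L2K_sym r x), H0 in P.
 assert (E : t * L2K x r = - (L2K x x + 1) / 2) by (unfold t; field; auto).
 replace (1 * (1 * L2K x x + t * L2K x r) + t * (1 * L2K x r + t * 0)) with (L2K x x + 2 * (t * L2K x r)) in P by ring.
 rewrite E in P. lra. Qed.

Lemma proj_exists k (es : list VF) : forall (W : VF -> Prop),
  (forall w, W w -> QF k w) -> W vzero ->
  (forall u v l m, W u -> W v -> W (vlin l u m v)) ->
  (forall w, W w -> in_span es w) ->
  forall v, QF k v -> exists p, W p /\ forall w, W w -> L2K (vlin 1 v (-1) p) w = 0.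
Proof. induction es as [|e es IH]; intros W HQ H0 Hlin Hsp v Hv.
 - exists vzero; split; auto. intros w Hw. rewrite (Hsp w Hw). apply L2K_zero.
 - destruct (classic (exists ws, W ws /\ exists s, in_span es s /\ ws = vlin 1 e 1 s)) as [Hex|Hno].
   + destruct Hex as (ws & Hws & ss & Hss & Ews).
     set (W' := fun w => W w /\ in_span es w).
     assert (HQ' : forall w, W' w -> QF k w) by (intros w [Hw _]; auto).
     assert (H0' : W' vzero) by (split; auto; apply span_zero).
     assert (Hlin' : forall u v l m, W' u -> W' v -> W' (vlin l u m v)).
     { intros u0 v0 l m [] []; split; auto. apply span_lin; auto. }
     destruct (IH W' HQ' H0' Hlin' (fun w Hw => proj2 Hw) v Hv) as (p' & [Hp'1 Hp'2] & Hp').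
     destruct (IH W' HQ' H0' Hlin' (fun w Hw => proj2 Hw) ws (HQ _ Hws)) as (q' & [Hq'1 Hq'2] & Hq').
     set (r := vlin 1 ws (-1) q'). set (d := vlin 1 v (-1) p').
     assert (Wr : W r) by (apply Hlin; auto).
     assert (Qr : QF k r) by auto. assert (Qp' : QF k p') by auto.
     assert (Qd : QF k d) by (apply QF_lin; auto).
     set (c := if Req_EM_T (L2K r r) 0 then 0 else L2K d r / L2K r r).
     exists (vlin 1 p' c r). split. apply Hlin; auto.
     intros w Hw. destruct (Hsp w Hw) as (a & s & Hs & Ew).
     set (z := vlin 1 (vlin 1 w (-a) ws) a q').
     assert (Wz : W' z).
     { split. apply Hlin; auto.
       apply span_lin; auto. replace (vlin 1 w (-a) ws) with (vlin 1 s (-a) ss).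
       apply span_lin; auto. subst w ws. vfeq. }
     assert (Ewz : w = vlin 1 z a r) by (unfold z, r; vfeq).
     assert (Qz : QF k z) by (apply HQ'; auto).
     replace (vlin 1 v (-1) (vlin 1 p' c r)) with (vlin 1 d (-c) r) by (unfold d; vfeq).
     rewrite Ewz. rewrite (L2K_lin_r k) by (try apply QF_lin; auto). rewrite !(L2K_lin k) by (try apply QF_lin; auto).
     pose proof (Hp' z Wz) as E1. fold d in E1. rewrite E1.
     pose proof (Hq' z Wz) as E2. fold r in E2. rewrite E2.
     unfold c. destruct (Req_EM_T (L2K r r) 0) as [E|E].
     * rewrite (CS0 k d r) by auto. rewrite E. ring.
     * field. auto.
   + apply (IH W); auto. intros w Hw. destruct (Hsp w Hw) as (a & s & Hs & Ew).
     destruct (Req_dec a 0) as [Ea|Ea].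
     * replace w with s; auto. subst. vfeq.
     * exfalso. apply Hno. exists (vlin (/ a) w 0 w). split. apply Hlin; auto.
       exists (vlin (/ a) s 0 s). split. apply span_lin; auto.
       subst w. apply VF_eq; intros; simpl; field; auto. Qed.


Lemma Pk2_QF k u : is_Pk2 k u <-> QF k u.
Proof. split; intros [H1 H2]; split. apply Pk_Q; auto. apply Pk_Q; auto. apply Q_Pk; auto. apply Q_Pk; auto. Qed.

Lemma vadd_lin u v : vadd u v = vlin 1 u 1 v.
Proof. vfeq. Qed.
Lemma QF_add k u v : QF k u -> QF k v -> QF k (vadd u v).
Proof. intros; rewrite vadd_lin; apply QF_lin; auto. Qed.
Lemma QF_zero k : QF k vzero.
Proof. split; exact (Q_const k 0). Qed.
Lemma QF_vsum k F n : (forall i, (i < n)%nat -> QF k (F i)) -> QF k (vsum F n).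
Proof. induction n; simpl; intros. apply QF_zero. apply QF_add; auto. Qed.

Lemma divg_lin k u v l m : QF k u -> QF k v -> forall x y,
  divg (vlin l u m v) x y = l * divg u x y + m * divg v x y.
Proof. intros [Hu1 Hu2] [Hv1 Hv2] x y. rewrite !divg_px. simpl.
 destruct (CR_lin _ _ l m (Q_CR _ _ Hu1) (Q_CR _ _ Hv1)) as [E1 _].
 destruct (CR_lin _ _ l m (Q_CR _ _ Hu2) (Q_CR _ _ Hv2)) as [_ [E2 _]].
 rewrite E1, E2. ring. Qed.
Lemma divfree_lin k u v l m : QF k u -> QF k v -> div_free u -> div_free v -> div_free (vlin l u m v).
Proof. intros Hu Hv Du Dv x y. rewrite (divg_lin k) by auto. rewrite Du, Dv; ring. Qed.
Lemma divfree_zero : div_free vzero.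
Proof. intros x y. unfold divg. simpl. rewrite !Derive_const. ring. Qed.
Lemma divfree_const a b : div_free (mkVF (fun _ _ => a) (fun _ _ => b)).
Proof. intros x y. unfold divg. simpl. rewrite !Derive_const. ring. Qed.
Lemma divfree_vsum k F n : (forall i, (i < n)%nat -> QF k (F i) /\ div_free (F i)) -> div_free (vsum F n).
Proof. induction n; simpl; intros H. apply divfree_zero. rewrite vadd_lin.
 apply (divfree_lin k). apply QF_vsum; intros; apply H; lia. apply H; lia.
 apply IHn; intros; apply H; lia. apply H; lia. Qed.

Lemma ntrace_lin u v l m f s : ntrace (vlin l u m v) f s = l * ntrace u f s + m * ntrace v f s.
Proof. unfold ntrace; simpl; ring. Qed.
Lemma ntrace_add u v f s : ntrace (vadd u v) f s = ntrace u f s + ntrace v f s.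
Proof. unfold ntrace; simpl; ring. Qed.
Lemma ntrace_vsum F n f s : ntrace (vsum F n) f s = sumR (fun i => ntrace (F i) f s) n.
Proof. induction n; simpl. unfold ntrace; simpl; ring. rewrite ntrace_add, IHn; auto. Qed.

Lemma Phi_QF k w : in_Phi k w -> QF k w.
Proof. intros [H _]. apply Pk2_QF; auto. Qed.
Lemma Phi_zero k : in_Phi k vzero.
Proof. split. apply Pk2_QF, QF_zero. split. apply divfree_zero. intros; unfold ntrace; simpl; ring. Qed.
Lemma Phi_lin k u v l m : in_Phi k u -> in_Phi k v -> in_Phi k (vlin l u m v).
Proof. intros Hu Hv. pose proof (Phi_QF _ _ Hu). pose proof (Phi_QF _ _ Hv).
 destruct Hu as (_ & Du & Tu), Hv as (_ & Dv & Tv). split. apply Pk2_QF, QF_lin; auto.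
 split. apply (divfree_lin k); auto. intros f s Hs. rewrite ntrace_lin, Tu, Tv; auto; ring. Qed.

Definition mon1 i j := mkVF (fun x y => x ^ i * y ^ j) (fun _ _ => 0).
Definition mon2 i j := mkVF (fun _ _ => 0) (fun x y => x ^ i * y ^ j).
Definition monlist k := flat_map (fun i => flat_map (fun j => mon1 i j :: mon2 i j :: nil) (seq 0 (S k))) (seq 0 (S k)).

Lemma mon_In k i j : (i <= k)%nat -> (j <= k)%nat -> In (mon1 i j) (monlist k) /\ In (mon2 i j) (monlist k).
Proof. intros Hi Hj. unfold monlist. split; apply in_flat_map; exists i; split; try (apply in_seq; lia);
 apply in_flat_map; exists j; split; try (apply in_seq; lia); simpl; auto. Qed.

Lemma span_sum1 es (F : nat -> R -> R -> R) n : (forall i, (i < n)%nat -> in_span es (mkVF (F i) (fun _ _ => 0))) ->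
  in_span es (mkVF (fun x y => sumR (fun i => F i x y) n) (fun _ _ => 0)).
Proof. induction n; intros H. apply span_zero.
 replace (mkVF (fun x y => sumR (fun i => F i x y) (S n)) (fun _ _ => 0)) with
   (vlin 1 (mkVF (fun x y => sumR (fun i => F i x y) n) (fun _ _ => 0)) 1 (mkVF (F n) (fun _ _ => 0))) by vfeq.
 apply span_lin; auto. Qed.
Lemma span_sum2 es (F : nat -> R -> R -> R) n : (forall i, (i < n)%nat -> in_span es (mkVF (fun _ _ => 0) (F i))) ->
  in_span es (mkVF (fun _ _ => 0) (fun x y => sumR (fun i => F i x y) n)).
Proof. induction n; intros H. apply span_zero.
 replace (mkVF (fun _ _ => 0) (fun x y => sumR (fun i => F i x y) (S n))) with
   (vlin 1 (mkVF (fun _ _ => 0) (fun x y => sumR (fun i => F i x y) n)) 1 (mkVF (fun _ _ => 0) (F n))) by vfeq.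
 apply span_lin; auto. Qed.

Lemma QF_span k w : QF k w -> in_span (monlist k) w.
Proof. intros Hw. apply Pk2_QF in Hw. destruct Hw as [[c Hc] [d Hd]].
 replace w with (vlin 1 (mkVF (fun x y => sumR (fun i => sumR (fun j => c i j * x ^ i * y ^ j) (S k - i)) (S k)) (fun _ _ => 0))
                      1 (mkVF (fun _ _ => 0) (fun x y => sumR (fun i => sumR (fun j => d i j * x ^ i * y ^ j) (S k - i)) (S k)))).
 2: { apply VF_eq; intros; unfold vlin; cbn [Defs.c1 Defs.c2]; rewrite ?Hc, ?Hd; ring. }
 apply span_lin.
 - apply (span_sum1 _ (fun i x y => sumR (fun j => c i j * x ^ i * y ^ j) (S k - i))). intros i Hi.
   apply (span_sum1 _ (fun j x y => c i j * x ^ i * y ^ j)). intros j Hj.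
   replace (mkVF (fun x y => c i j * x ^ i * y ^ j) (fun _ _ => 0)) with (vlin (c i j) (mon1 i j) 0 (mon1 i j)) by vfeq.
   apply span_lin; apply span_In; apply (mon_In k i j); lia.
 - apply (span_sum2 _ (fun i x y => sumR (fun j => d i j * x ^ i * y ^ j) (S k - i))). intros i Hi.
   apply (span_sum2 _ (fun j x y => d i j * x ^ i * y ^ j)). intros j Hj.
   replace (mkVF (fun _ _ => 0) (fun x y => d i j * x ^ i * y ^ j)) with (vlin (d i j) (mon2 i j) 0 (mon2 i j)) by vfeq.
   apply span_lin; apply span_In; apply (mon_In k i j); lia. Qed.

Lemma proj_Phi k v : QF k v -> exists p, in_Phi k p /\ forall w, in_Phi k w -> L2K (vlin 1 v (-1) p) w = 0.
Proof. intros Hv. apply (proj_exists k (monlist k) (in_Phi k)); auto.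
 apply Phi_QF. apply Phi_zero. intros; apply Phi_lin; auto. intros; apply QF_span, Phi_QF; auto. Qed.


Definition psi (f : edge) (i : nat) : R -> R -> R :=
  match f with
  | Ebot => fun x y => 4 * x * (1 - x - y) * dleg i (2 * x - 1)
  | Ehyp => fun x y => 4 * x * y * dleg i (2 * y - 1)
  | Eleft => fun x y => 4 * y * (1 - x - y) * dleg i (1 - 2 * y)
  end.

Lemma Q1_aff a b c : Q 1 (fun x y => a + b * x + c * y).
Proof. exists a, (fun _ _ => b), (fun _ _ => c). split. exists b; auto. split. exists c; auto. fext; ring. Qed.
Lemma Q_ext n f g : (forall x y, f x y = g x y) -> Q n f -> Q n g.
Proof. intros H; replace g with f; auto. fext; auto. Qed.

Lemma psi_Q k f i : (1 <= i <= k)%nat -> Q (S k) (psi f i).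
Proof. intros Hi.
 assert (H2 : forall a1 b1 c1 a2 b2 c2 al be ga,
   Q (S k) (fun x y => (a1 + b1 * x + c1 * y) * (a2 + b2 * x + c2 * y) * dleg i (al * x + be * y + ga))).
 { intros. apply Q_mono_le' with ((1 + 1) + pred i)%nat; [|lia].
   apply (Q_mul (1 + 1) (pred i) (fun x y => (a1 + b1 * x + c1 * y) * (a2 + b2 * x + c2 * y))).
   apply (Q_mul 1 1 (fun x y => a1 + b1 * x + c1 * y)); apply Q1_aff.
   apply Q_univ, dleg_U. }
 destruct f; cbv [psi].
 - refine (Q_ext (S k) _ _ _ (H2 0 4 0 1 (-1) (-1) 2 0 (-1))). intros x y. f_equal; [ring| f_equal; ring].
 - refine (Q_ext (S k) _ _ _ (H2 0 4 0 0 0 1 0 2 (-1))). intros x y. f_equal; [ring| f_equal; ring].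
 - refine (Q_ext (S k) _ _ _ (H2 0 0 4 1 (-1) (-1) 0 (-2) 1)). intros x y. f_equal; [ring| f_equal; ring]. Qed.

Definition tpar (g : edge) (s : R) := 2 * s / elen g - 1.

Lemma psi_edge f i g s : psi f i (epx g s) (epy g s) =
  if edge_eqb f g then (1 - tpar g s ^ 2) * dleg i (tpar g s) else 0.
Proof. pose proof sqrt2_pos. unfold tpar.
 destruct f, g; simpl; try ring.
 - replace (2 * s / 1 - 1) with (2 * s - 1) by field. ring.
 - replace (2 * (s / sqrt 2) - 1) with (2 * s / sqrt 2 - 1) by (field; lra). field. lra.
 - replace (2 * s / 1 - 1) with (1 - 2 * (1 - s)) by field. ring. Qed.

Lemma Wcomp_deriv i g s : is_derive (fun s => (1 - tpar g s ^ 2) * dleg i (tpar g s)) s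
  (2 / elen g * (- (INR i * (INR i + 1)) * leg_edge g i s)).
Proof. pose proof (elen_pos g).
 assert (Dt : is_derive (tpar g) s (2 / elen g)).
 { pose proof (d_minus _ _ s _ _ (is_derive_scal _ s (2 / elen g) _ (d_id s)) (d_const 1 s)) as D.
   eapply d_ext; [| | exact D]; intros; unfold tpar; cbv beta; req; field; lra. }
 pose proof (d_comp _ _ s _ _ (W_deriv i (tpar g s)) Dt) as D.
 eapply d_ext; [| | exact D]; intros; cbv beta; auto. all: try (unfold leg_edge, tpar; req; ring). Qed.

Lemma curl_QF k psi0 : Q (S k) psi0 -> QF k (curl psi0).
Proof. intros H. destruct (Q_D _ _ H) as (_ & Hx & Hy). split; simpl; auto.
 eapply Q_ext; [| apply (Q_scal _ _ (-1) Hx)]. intros; simpl; ring. Qed.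
Lemma curl_div k psi0 : Q k psi0 -> div_free (curl psi0).
Proof. intros H x y. rewrite divg_px. simpl.
 destruct (Q_D _ _ H) as (C & Hx & Hy).
 destruct (CR_lin (px psi0) (px psi0) (-1) 0 (Q_CR _ _ Hx) (Q_CR _ _ Hx)) as [_ [E _]].
 replace (fun x y => - px psi0 x y) with (fun x y => -1 * px psi0 x y + 0 * px psi0 x y) by (fext; ring).
 rewrite E. rewrite (Q_mixed _ _ H). ring. Qed.

Lemma curl_trace k f i g s : (1 <= i <= k)%nat ->
  ntrace (curl (psi f i)) g s = if edge_eqb f g then 2 / elen g * (- (INR i * (INR i + 1)) * leg_edge g i s) else 0.
Proof. intros Hi. pose proof (tr_curl _ (Q_CR _ _ (psi_Q k f i Hi)) g s) as D.
 apply (is_derive_unique (fun s => psi f i (epx g s) (epy g s))) in D. rewrite <- D.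
 apply is_derive_unique.
 destruct (edge_eqb f g) eqn:E.
 - eapply d_ext; [| | apply Wcomp_deriv]. intros; rewrite psi_edge, E; auto. reflexivity.
 - eapply d_ext; [| | apply (d_const 0)]. intros; rewrite psi_edge, E; auto. reflexivity. Qed.

Lemma base_field k f i : (1 <= i <= k)%nat -> exists V, QF k V /\ div_free V /\
  (forall w, in_Phi k w -> L2K V w = 0) /\
  (forall g s, 0 <= s <= elen g -> ntrace V g s = if edge_eqb f g then leg_edge g i s else 0).
Proof. intros Hi.
 set (kap := 2 / elen f * (- (INR i * (INR i + 1)))).
 assert (Hk : kap <> 0).
 { unfold kap. pose proof (elen_pos f). assert (0 < INR i) by (apply lt_0_INR; lia).
   apply Rmult_integral_contrapositive; split. apply Rgt_not_eq, Rdiv_lt_0_compat; lra. nra. }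
 set (B := vlin (/ kap) (curl (psi f i)) 0 (curl (psi f i))).
 assert (QB : QF k B) by (apply QF_lin; apply curl_QF, psi_Q; auto).
 assert (DB : div_free B).
 { apply (divfree_lin k); try (apply curl_QF, psi_Q; auto); apply (curl_div (S k)), psi_Q; auto. }
 destruct (proj_Phi k B QB) as (p & Hp & Hperp).
 exists (vlin 1 B (-1) p). split. apply QF_lin; auto. apply Phi_QF; auto.
 split. apply (divfree_lin k); auto. apply Phi_QF; auto. apply Hp.
 split. auto.
 intros g s Hs. rewrite ntrace_lin. destruct Hp as (_ & _ & Tp). rewrite Tp by auto.
 unfold B. rewrite ntrace_lin, (curl_trace k) by auto.
 destruct (edge_eqb f g) eqn:E.
 - assert (f = g) by (destruct f, g; try discriminate; auto). subst g.
   unfold kap. field. split. apply Rgt_not_eq, elen_pos.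
   pose proof (elen_pos f). assert (0 < INR i) by (apply lt_0_INR; lia). nra.
 - ring. Qed.


Definition Eg (g : edge) (j : nat) (p : R -> R) := RInt (fun s => p s * leg_edge g j s) 0 (elen g).

Lemma Eg_ext g j p q : (forall s, 0 <= s <= elen g -> p s = q s) -> Eg g j p = Eg g j q.
Proof. intros H. unfold Eg. apply RInt_ext. intros x Hx. pose proof (elen_pos g).
 rewrite Rmin_left, Rmax_right in Hx by lra. rewrite H by lra. auto. Qed.
Lemma Eg_lin g j p q l m : (forall s, continuous p s) -> (forall s, continuous q s) ->
  Eg g j (fun s => l * p s + m * q s) = l * Eg g j p + m * Eg g j q.
Proof. intros Hp Hq. unfold Eg. rewrite <- RInt_lin.
 f_equal; fext; ring. all: apply cont_exRInt; intros; apply c_mult; auto; apply leg_edge_cont. Qed.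
Lemma Eg_sum g j (F : nat -> R -> R) n : (forall i s, (i < n)%nat -> continuous (F i) s) ->
  Eg g j (fun s => sumR (fun i => F i s) n) = sumR (fun i => Eg g j (F i)) n.
Proof. induction n; intros H; simpl.
 - unfold Eg. rewrite (RInt_ext _ (fun _ => 0)). rewrite RInt_const. unfold scal; simpl; unfold mult; simpl; req; ring.
   intros; req; ring.
 - rewrite <- IHn by (intros; apply H; lia).
   replace (fun s => sumR (fun i => F i s) n + F n s) with (fun s => 1 * sumR (fun i => F i s) n + 1 * F n s) by (fext; ring).
   rewrite Eg_lin. ring. 2: intros; apply H; lia.
   intros s. clear IHn. induction n; simpl. apply c_const. apply c_plus. apply IHn; intros; apply H; lia. apply H; lia. Qed.
Lemma cont_sumR (F : nat -> R -> R) n s : (forall i, (i < n)%nat -> continuous (F i) s) ->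
  continuous (fun s => sumR (fun i => F i s) n) s.
Proof. induction n; simpl; intros H. apply c_const. apply c_plus. apply IHn; intros; apply H; lia. apply H; lia. Qed.
Lemma Eg_const g j c : Eg g j (fun _ => c) = if Nat.eqb j 0 then c * elen g else 0.
Proof. unfold Eg. pose proof (elen_pos g).
 rewrite (RInt_ext _ (fun s => c * (leg_edge g 0 s * leg_edge g j s))).
 2: { intros x _; replace (leg_edge g 0 x) with 1 by (unfold leg_edge; symmetry; apply leg0); req; ring. }
 rewrite (RInt_scal (V := R_CompleteNormedModule)). unfold scal; simpl; unfold mult; simpl.
 destruct (Nat.eqb_spec j 0). subst. fold (Nleg g 0). 
 replace (RInt (fun s => leg_edge g 0 s * leg_edge g 0 s) 0 (elen g)) with (Nleg g 0). rewrite Nleg0; ring.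
 unfold Nleg; f_equal; fext; ring.
 rewrite leg_edge_orth; auto. ring.
 apply cont_exRInt; intros; apply c_mult; apply leg_edge_cont. Qed.
Lemma Eg_L2B k v g j : QF k v -> L2B (ntrace v) (scrL g j) = Eg g j (ntrace v g) / sqrt (Nleg g j).
Proof. intros H. apply L2B_scrL. intros; eapply tr_cont; eauto. Qed.
Lemma Eg_zero k v g j : QF k v -> L2B (ntrace v) (scrL g j) = 0 -> Eg g j (ntrace v g) = 0.
Proof. intros H E. rewrite (Eg_L2B k) in E by auto. pose proof (sqrt_lt_R0 _ (Nleg_pos g j)).
 unfold Rdiv in E. apply Rmult_integral in E. destruct E; auto.
 exfalso. apply Rinv_neq_0_compat in H1; auto. lra. Qed.

Lemma collapse (F : nat -> R) i0 n : (i0 < n)%nat -> (forall i, (i < n)%nat -> i <> i0 -> F i = 0) ->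
  sumR F n = F i0.
Proof. induction n; intros H1 H2. lia. simpl. destruct (Nat.eq_dec n i0).
 - subst. rewrite (sumR_zero_ext F i0). ring. intros; apply H2; lia.
 - rewrite IHn; [|lia|intros; apply H2; lia]. rewrite (H2 n); [ring|lia|auto]. Qed.

Lemma const_eq v : is_const v -> exists a b, v = mkVF (fun _ _ => a) (fun _ _ => b).
Proof. intros (a & b & H). exists a, b. apply VF_eq; intros; simpl; apply H. Qed.
Lemma QF_const k a b : QF k (mkVF (fun _ _ => a) (fun _ _ => b)).
Proof. split; [exact (Q_const k a) | exact (Q_const k b)]. Qed.

Lemma veq_trace u v : veq u v -> forall g s, ntrace u g s = ntrace v g s.
Proof. intros H g s. unfold ntrace. destruct (H (epx g s) (epy g s)) as [-> ->]; auto. Qed.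

Definition tsum (V : edge -> nat -> VF) (k : nat) (g : edge) (s : R) :=
  sumR (fun i => ntrace (V Ebot (S i)) g s + ntrace (V Ehyp (S i)) g s + ntrace (V Eleft (S i)) g s) k.

Lemma dec_trace k u v0 v1 V : is_decomp k u v0 v1 V -> forall g s, 0 <= s <= elen g ->
  ntrace u g s = ntrace v1 g s + tsum V k g s.
Proof. intros (Heq & (_ & _ & T0) & _) g s Hs. rewrite (veq_trace _ _ Heq). unfold decomp_sum.
 rewrite !ntrace_add, T0 by auto. rewrite ntrace_vsum. unfold tsum. rewrite Rplus_0_l. f_equal.
 apply sumR_ext; intros. rewrite !ntrace_add; auto. Qed.

Lemma dec_QF k u v0 v1 V : is_decomp k u v0 v1 V -> forall f i, (1 <= i <= k)%nat -> QF k (V f i).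
Proof. intros (_ & _ & _ & H) f i Hi. apply Pk2_QF, (H f i Hi). Qed.

Lemma dec_Eg k u v0 v1 V : is_decomp k u v0 v1 V -> forall g j, (j <= k)%nat ->
  Eg g j (ntrace u g) = Eg g j (ntrace v1 g) + (if Nat.eqb j 0 then 0 else Eg g j (ntrace (V g j) g)).
Proof. intros Hd g j Hj. pose proof (dec_QF _ _ _ _ _ Hd) as QV. pose proof Hd as Hd'.
 destruct Hd as (Heq & H0 & Hc & HV).
 destruct (const_eq _ Hc) as (a & b & Ev1).
 assert (Cv1 : forall s, continuous (ntrace v1 g) s) by (intros s; apply (tr_cont k); rewrite Ev1; apply QF_const).
 assert (CV : forall f i s, (i < k)%nat -> continuous (ntrace (V f (S i)) g) s).
 { intros; apply (tr_cont k); apply QV; lia. }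
 assert (Ct : forall s, continuous (tsum V k g) s).
 { intros s. unfold tsum. apply (cont_sumR (fun i s => ntrace (V Ebot (S i)) g s + ntrace (V Ehyp (S i)) g s + ntrace (V Eleft (S i)) g s)). intros i Hi. apply c_plus; [apply c_plus|]; apply CV; lia. }
 rewrite (Eg_ext g j _ (fun s => 1 * ntrace v1 g s + 1 * tsum V k g s)).
 2: { intros; rewrite (dec_trace k u v0 v1 V) by auto. req; ring. }
 rewrite Eg_lin by auto. unfold tsum. rewrite Eg_sum.
 2: { intros; apply c_plus; [apply c_plus|]; apply CV; lia. }
 rewrite (sumR_ext _ (fun i => Eg g j (ntrace (V Ebot (S i)) g) + Eg g j (ntrace (V Ehyp (S i)) g) + Eg g j (ntrace (V Eleft (S i)) g))).
 2: { intros i Hi.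
      replace (fun s => ntrace (V Ebot (S i)) g s + ntrace (V Ehyp (S i)) g s + ntrace (V Eleft (S i)) g s)
        with (fun s => 1 * (fun s => 1 * ntrace (V Ebot (S i)) g s + 1 * ntrace (V Ehyp (S i)) g s) s + 1 * ntrace (V Eleft (S i)) g s) by (fext; ring).
      rewrite Eg_lin, Eg_lin; auto. ring. intros; apply c_plus; apply c_mult; auto; apply c_const. }
 assert (Z : forall f i, (i < k)%nat -> (g <> f \/ j <> S i) -> Eg g j (ntrace (V f (S i)) g) = 0).
 { intros f i Hi Hne. apply (Eg_zero k). apply QV; lia. destruct (HV f (S i) ltac:(lia)) as (_ & _ & _ & Ho). apply Ho; auto. }
 destruct j as [|j0].
 - simpl. rewrite (sumR_zero_ext _ k). ring. intros i Hi. rewrite !Z; auto; try ring.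
 - simpl. rewrite (collapse _ j0 k) by (try lia; intros i Hi Hne; rewrite !Z; auto; try ring; right; congruence).
   destruct g.
   + rewrite (Z Ehyp j0), (Z Eleft j0) by (lia || (left; intro Hx; discriminate)); ring.
   + rewrite (Z Ebot j0), (Z Eleft j0) by (lia || (left; intro Hx; discriminate)); ring.
   + rewrite (Z Ebot j0), (Z Ehyp j0) by (lia || (left; intro Hx; discriminate)); ring. Qed.


Lemma vsum_ext F G n : (forall i, (i < n)%nat -> veq (F i) (G i)) -> veq (vsum F n) (vsum G n).
Proof. induction n; intros H x y; simpl. split; auto.
 destruct (IHn (fun i Hi => H i ltac:(lia)) x y) as [A B]. destruct (H n ltac:(lia) x y) as [C D].
 rewrite A, B, C, D; split; auto. Qed.

Lemma tr_const a b g : ntrace (mkVF (fun _ _ => a) (fun _ _ => b)) g = fun _ => a * enx g + b * eny g.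
Proof. reflexivity. Qed.

Lemma uniq k u v0 v1 V w0 w1 W : is_decomp k u v0 v1 V -> is_decomp k u w0 w1 W ->
  veq v0 w0 /\ veq v1 w1 /\ forall f i, (1 <= i <= k)%nat -> veq (V f i) (W f i).
Proof. intros Hv Hw.
 pose proof (dec_Eg _ _ _ _ _ Hv) as EV. pose proof (dec_Eg _ _ _ _ _ Hw) as EW.
 pose proof (dec_QF _ _ _ _ _ Hv) as QV. pose proof (dec_QF _ _ _ _ _ Hw) as QW.
 destruct Hv as (Hveq & Hv0 & Hv1 & HV), Hw as (Hweq & Hw0 & Hw1 & HW).
 destruct (const_eq _ Hv1) as (a & b & Ev1), (const_eq _ Hw1) as (a' & b' & Ew1).
 assert (E0 : forall g, Eg g 0 (ntrace v1 g) = Eg g 0 (ntrace w1 g)).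
 { intros g. specialize (EV g 0%nat ltac:(lia)). specialize (EW g 0%nat ltac:(lia)). simpl in EV, EW. lra. }
 assert (Hab : a = a' /\ b = b').
 { pose proof (E0 Ebot) as Eb. pose proof (E0 Eleft) as El. subst v1 w1.
   rewrite !tr_const, !Eg_const in Eb, El. simpl in Eb, El. split; lra. }
 destruct Hab as [<- <-]. subst v1 w1.
 assert (HVW : forall f i, (1 <= i <= k)%nat -> veq (V f i) (W f i)).
 { intros f i Hi.
   assert (Ef : Eg f i (ntrace (V f i) f) = Eg f i (ntrace (W f i) f)).
   { specialize (EV f i ltac:(lia)). specialize (EW f i ltac:(lia)).
     replace (Nat.eqb i 0) with false in EV, EW by (symmetry; apply Nat.eqb_neq; lia). lra. }
   set (D := vlin 1 (V f i) (-1) (W f i)).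
   assert (QD : QF k D) by (apply QF_lin; auto).
   destruct (HV f i Hi) as (_ & HVp & HVd & HVo). destruct (HW f i Hi) as (_ & HWp & HWd & HWo).
   assert (PD : in_Phi k D).
   { split. apply Pk2_QF; auto. split. apply (divfree_lin k); auto.
     intros g s Hs. apply (edge_zero g k); auto. apply tr_U; auto.
     intros j Hj. fold (Eg g j (ntrace D g)).
     replace (ntrace D g) with (fun s => 1 * ntrace (V f i) g s + (-1) * ntrace (W f i) g s) by (fext; unfold D; rewrite ntrace_lin; auto).
     rewrite Eg_lin by (intros; eapply tr_cont; eauto).
     destruct (classic (g = f /\ j = i)) as [[-> ->]|Hne].
     - rewrite Ef; req; ring.
     - assert (Hne' : g <> f \/ j <> i) by tauto.
       rewrite (Eg_zero k (V f i)), (Eg_zero k (W f i)); auto; req; ring. }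
   assert (L0 : L2K D D = 0).
   { unfold D at 1. rewrite (L2K_lin k) by auto. rewrite HVp, HWp by auto. ring. }
   intros x y. destruct (L2K_def k D QD L0 x y) as [A B]. unfold D in A, B; simpl in A, B. split; lra. }
 split; [|split; auto; intros x y; split; auto].
 intros x y. destruct (Hveq x y) as [A1 A2], (Hweq x y) as [B1 B2].
 assert (S : veq (vsum (fun i => vadd (vadd (V Ebot (S i)) (V Ehyp (S i))) (V Eleft (S i))) k)
                 (vsum (fun i => vadd (vadd (W Ebot (S i)) (W Ehyp (S i))) (W Eleft (S i))) k)).
 { apply vsum_ext. intros i Hi x' y'. simpl.
   destruct (HVW Ebot (S i) ltac:(lia) x' y') as [-> ->].
   destruct (HVW Ehyp (S i) ltac:(lia) x' y') as [-> ->].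
   destruct (HVW Eleft (S i) ltac:(lia) x' y') as [-> ->]. split; auto. }
 destruct (S x y) as [S1 S2]. unfold decomp_sum in *. simpl in A1, A2, B1, B2.
 split; lra. Qed.


Definition BFprop k f i V := QF k V /\ div_free V /\
  (forall w, in_Phi k w -> L2K V w = 0) /\
  (forall g s, 0 <= s <= elen g -> ntrace V g s = if edge_eqb f g then leg_edge g i s else 0).

Lemma leg_edge0 g s : leg_edge g 0 s = 1.
Proof. unfold leg_edge; apply leg0. Qed.

Lemma existence k u : is_Pk2 k u -> div_free u -> exists v0 v1 V, is_decomp k u v0 v1 V.
Proof. intros Hu Du. pose proof (proj1 (Pk2_QF k u) Hu) as QU.
 assert (HB : forall f i, exists Vb, (1 <= i <= k)%nat -> BFprop k f i Vb).
 { intros f i. destruct (classic (1 <= i <= k)%nat) as [Hi|Hi].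
   destruct (base_field k f i Hi) as [Vb H]; exists Vb; auto. exists vzero; intros; contradiction. }
 set (Vt := fun f i => proj1_sig (constructive_indefinite_description _ (HB f i))).
 assert (HVt : forall f i, (1 <= i <= k)%nat -> BFprop k f i (Vt f i)).
 { intros f i Hi. unfold Vt. destruct (constructive_indefinite_description _ (HB f i)); simpl; auto. }
 assert (HA : forall g, exists a : nat -> R, forall s, ntrace u g s = sumR (fun j => a j * leg_edge g j s) (S k)).
 { intros g; apply edge_span; apply tr_U; auto. }
 set (A := fun g => proj1_sig (constructive_indefinite_description _ (HA g))).
 assert (HA' : forall g s, ntrace u g s = sumR (fun j => A g j * leg_edge g j s) (S k)).
 { intros g. unfold A. destruct (constructive_indefinite_description _ (HA g)); simpl; auto. }
 assert (Fg : forall g, RInt (ntrace u g) 0 (elen g) = A g 0%nat * elen g).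
 { intros g. rewrite <- (Nleg0 g) at 2. rewrite <- (edge_coef g k (A g) (ntrace u g) (HA' g) 0%nat) by lia.
   apply RInt_ext; intros; rewrite leg_edge0; req; ring. }
 pose proof (flux_zero k u Hu Du) as Fl. rewrite !Fg in Fl. simpl elen in Fl.
 set (V := fun f i => vlin (A f i) (Vt f i) 0 (Vt f i)).
 set (v1 := mkVF (fun _ _ => - A Eleft 0%nat) (fun _ _ => - A Ebot 0%nat)).
 set (Ssum := vsum (fun i => vadd (vadd (V Ebot (S i)) (V Ehyp (S i))) (V Eleft (S i))) k).
 set (v0 := vlin 1 u (-1) (vadd v1 Ssum)).
 assert (QV : forall f i, (1 <= i <= k)%nat -> QF k (V f i)).
 { intros f i Hi. destruct (HVt f i Hi) as [Q _]. apply QF_lin; auto. }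
 assert (DV : forall f i, (1 <= i <= k)%nat -> div_free (V f i)).
 { intros f i Hi. destruct (HVt f i Hi) as [Q [D _]]. apply (divfree_lin k); auto. }
 assert (QS : QF k Ssum).
 { apply QF_vsum. intros i Hi. repeat apply QF_add; apply QV; lia. }
 assert (DS : div_free Ssum).
 { apply (divfree_vsum k). intros i Hi. split. repeat apply QF_add; apply QV; lia.
   pose proof (QV Ebot (S i) ltac:(lia)). pose proof (QV Ehyp (S i) ltac:(lia)). pose proof (QV Eleft (S i) ltac:(lia)).
   pose proof (DV Ebot (S i) ltac:(lia)). pose proof (DV Ehyp (S i) ltac:(lia)). pose proof (DV Eleft (S i) ltac:(lia)).
   rewrite !vadd_lin. apply (divfree_lin k); auto. apply QF_lin; auto. apply (divfree_lin k); auto. }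
 assert (Qv1 : QF k v1) by apply QF_const.
 assert (trV : forall f i g s, (1 <= i <= k)%nat -> 0 <= s <= elen g ->
   ntrace (V f i) g s = A f i * (if edge_eqb f g then leg_edge g i s else 0)).
 { intros f i g s Hi Hs. unfold V. rewrite ntrace_lin. destruct (HVt f i Hi) as (_ & _ & _ & T).
   rewrite T by auto. ring. }
 assert (trS : forall g s, 0 <= s <= elen g -> ntrace Ssum g s = sumR (fun i => A g (S i) * leg_edge g (S i) s) k).
 { intros g s Hs. unfold Ssum. rewrite ntrace_vsum. apply sumR_ext. intros i Hi.
   rewrite !ntrace_add, !trV by (auto; lia). destruct g; simpl; ring. }
 assert (trv1 : forall g s, ntrace v1 g s = A g 0%nat * leg_edge g 0 s).
 { intros g s. rewrite leg_edge0. unfold v1, ntrace; destruct g; simpl; try ring.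
   pose proof sqrt2_pos. field_simplify; [|lra]. apply (Rmult_eq_reg_r (sqrt 2)); [|lra].
   field_simplify; [|lra]. lra. }
 exists v0, v1, V. split; [|split; [|split]].
 - intros x y. unfold decomp_sum, v0. fold Ssum. simpl. split; ring.
 - split. apply Pk2_QF. apply QF_lin; auto. apply QF_add; auto.
   split. apply (divfree_lin k); auto. apply QF_add; auto. rewrite vadd_lin. apply (divfree_lin k); auto.
   apply divfree_const.
   intros g s Hs. unfold v0. rewrite ntrace_lin, ntrace_add, trv1, trS, HA' by auto.
   rewrite sumR_shift. ring.
 - exists (- A Eleft 0%nat), (- A Ebot 0%nat). intros; split; reflexivity.
 - intros f i Hi. split. apply Pk2_QF; auto. split.
   + intros w Hw. destruct (HVt f i Hi) as (Q & _ & P & _). unfold V.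
     rewrite (L2K_lin k) by (auto; apply Phi_QF; auto). rewrite P; auto. ring.
   + split. auto. intros g j Hj Hne.
     rewrite (Eg_L2B k) by auto. unfold Eg.
     rewrite (RInt_ext _ (fun s => A f i * (if edge_eqb f g then leg_edge g i s * leg_edge g j s else 0))).
     2: { intros s Hs. pose proof (elen_pos g). rewrite Rmin_left, Rmax_right in Hs by lra.
          rewrite trV by (auto; lra). destruct (edge_eqb f g); req; ring. }
     destruct (edge_eqb f g) eqn:E.
     * assert (f = g) by (destruct f, g; try discriminate; auto). subst g.
       destruct Hne as [Hne|Hne]; [congruence|].
       rewrite (RInt_scal (V := R_CompleteNormedModule)). unfold scal; simpl; unfold mult; simpl.
       rewrite leg_edge_orth by auto. unfold Rdiv; ring.
       apply cont_exRInt; intros; apply c_mult; apply leg_edge_cont.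
     * rewrite (RInt_ext _ (fun _ => 0)). rewrite RInt_const. unfold scal; simpl; unfold mult; simpl. unfold Rdiv; ring.
       intros; req; ring. Qed.

Theorem proposition10 (k : nat) (u : VF) :
  is_Pk2 k u -> div_free u ->
  (exists (v0 v1 : VF) (V : edge -> nat -> VF), is_decomp k u v0 v1 V) /\
  (forall (v0 v1 : VF) (V : edge -> nat -> VF) (w0 w1 : VF) (W : edge -> nat -> VF),
     is_decomp k u v0 v1 V -> is_decomp k u w0 w1 W ->
     veq v0 w0 /\ veq v1 w1 /\
     (forall f i, (1 <= i <= k)%nat -> veq (V f i) (W f i))).
Proof. intros Hu Du. split. apply existence; auto. intros. eapply uniq; eauto. Qed.
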